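(* For each pair $(\mathsf{S},\mathsf{L})\in\{(\mathsf{S.ConstCKID},\mathsf{ConstCKID}),(\mathsf{S.ConstCKMP},\mathsf{ConstCKMP}),(\mathsf{S.ConstCKMPID},\mathsf{ConstCKMPID})\}$, a sequent $\Gamma\Rightarrow\Delta$ is derivable in $\mathsf{S}$ if and only if $\iota(\Gamma\Rightarrow\Delta)$ is derivable in $\mathsf{L}$.
   Context: Language $\mathcal{L}$: formulas $\varphi ::= p \mid \bot \mid \varphi\wedge\varphi \mid \varphi\vee\varphi \mid \varphi\to\varphi \mid \varphi \mathrel{\Box\!\!\to} \varphi \mid \varphi \mathrel{\Diamond\!\!\to}\varphi$; $\neg\varphi:=\varphi\to\bot$, $\top:=\neg\bot$, $\varphi\leftrightarrow\psi:=(\varphi\to\psi)\wedge(\psi\to\varphi)$. Hilbert systems: $\mathsf{ConstCK}$ = any axiomatisation of intuitionistic propositional logic in $\mathcal{L}$ with modus ponens, plus CM$_\Box$: $(\varphi\mathrel{\Box\!\!\to}\psi\wedge\chi)\to(\varphi\mathrel{\Box\!\!\to}\psi)\wedge(\varphi\mathrel{\Box\!\!\to}\chi)$; CC$_\Box$: $(\varphi\mathrel{\Box\!\!\to}\psi)\wedge(\varphi\mathrel{\Box\!\!\to}\chi)\to(\varphi\mathrel{\Box\!\!\to}\psi\wedge\chi)$; CN$_\Box$: $\varphi\mathrel{\Box\!\!\to}\top$; CN$_\Diamond$: $\neg(\varphi\mathrel{\Diamond\!\!\to}\bot)$; CK$_\Diamond$: $(\varphi\mathrel{\Box\!\!\to}(\psi\to\chi))\to((\varphi\mathrel{\Diamond\!\!\to}\psi)\to(\varphi\mathrel{\Diamond\!\!\to}\chi))$;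 rules RA$_\Box$: from $\varphi\leftrightarrow\rho$ infer $(\varphi\mathrel{\Box\!\!\to}\psi)\leftrightarrow(\rho\mathrel{\Box\!\!\to}\psi)$; RC$_\Box$: from $\psi\leftrightarrow\chi$ infer $(\varphi\mathrel{\Box\!\!\to}\psi)\leftrightarrow(\varphi\mathrel{\Box\!\!\to}\chi)$; RA$_\Diamond$, RC$_\Diamond$: the same with $\mathrel{\Diamond\!\!\to}$. $\mathsf{ConstCKID}$ = $\mathsf{ConstCK}$ + ID$_\Box$: $\varphi\mathrel{\Box\!\!\to}\varphi$. $\mathsf{ConstCKMP}$ = $\mathsf{ConstCK}$ + MP$_\Box$: $(\varphi\mathrel{\Box\!\!\to}\psi)\to(\varphi\to\psi)$ + MP$_\Diamond$: $\varphi\wedge\psi\to(\varphi\mathrel{\Diamond\!\!\to}\psi)$. $\mathsf{ConstCKMPID}$ = $\mathsf{ConstCK}$ + MP$_\Box$, MP$_\Diamond$, ID$_\Box$. A sequent $\Gamma\Rightarrow\Delta$ is a pair of finite multisets with $|\Delta|\le1$; $\varphi\Leftrightarrow\rho$ abbreviates $\varphi\Rightarrow\rho$ and $\rho\Rightarrow\varphi$. $\iota(\Gamma\Rightarrow\Delta)=\bigwedge\Gamma\to\bigvee\Delta$ if $\Gamma\neq\emptyset$, $\bigvee\Delta$ otherwise, $\bigvee\emptyset=\bot$. Throughout $0\le|\Delta|\le1$, $n\ge0$. Propositional rules (premisses / conclusion): init: $\Gamma,p\Rightarrow p$; $\bot_L$: $\Gamma,\bot\Rightarrow\Delta$; $\wedge_L$: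 $\Gamma,\varphi,\psi\Rightarrow\Delta$ / $\Gamma,\varphi\wedge\psi\Rightarrow\Delta$; $\wedge_R$: $\Gamma\Rightarrow\varphi$, $\Gamma\Rightarrow\psi$ / $\Gamma\Rightarrow\varphi\wedge\psi$; $\vee_L$: $\Gamma,\varphi\Rightarrow\Delta$, $\Gamma,\psi\Rightarrow\Delta$ / $\Gamma,\varphi\vee\psi\Rightarrow\Delta$; $\vee_R^1$: $\Gamma\Rightarrow\varphi$ / $\Gamma\Rightarrow\varphi\vee\psi$; $\vee_R^2$: $\Gamma\Rightarrow\psi$ / $\Gamma\Rightarrow\varphi\vee\psi$; $\to_R$: $\Gamma,\varphi\Rightarrow\psi$ / $\Gamma\Rightarrow\varphi\to\psi$; $\to_L$: $\Gamma,\varphi\to\psi\Rightarrow\varphi$, $\Gamma,\psi\Rightarrow\Delta$ / $\Gamma,\varphi\to\psi\Rightarrow\Delta$. With $B:=\rho_1\mathrel{\Box\!\!\to}\sigma_1,\dots,\rho_n\mathrel{\Box\!\!\to}\sigma_n$, $E:=\{\varphi\Leftrightarrow\rho_i\}_{i\le n}$: $\Box$: $E$, $\sigma_1,\dots,\sigma_n\Rightarrow\psi$ / $\Gamma,B\Rightarrow\varphi\mathrel{\Box\!\!\to}\psi$; $\Diamond$: $E$, $\varphi\Leftrightarrow\eta$, $\sigma_1,\dots,\sigma_n,\psi\Rightarrow\vartheta$ / $\Gamma,B,\varphi\mathrel{\Diamond\!\!\to}\psi\Rightarrow\eta\mathrel{\Diamond\!\!\to}\vartheta$; $\Box\Diamond$: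 $E$, $\sigma_1,\dots,\sigma_n,\psi\Rightarrow$ / $\Gamma,B,\varphi\mathrel{\Diamond\!\!\to}\psi\Rightarrow\Delta$; $\Box^{id}$: $E$, $\sigma_1,\dots,\sigma_n,\varphi\Rightarrow\psi$ / $\Gamma,B\Rightarrow\varphi\mathrel{\Box\!\!\to}\psi$; $\Box\Diamond^{id}$: $E$, $\sigma_1,\dots,\sigma_n,\varphi,\psi\Rightarrow$ / $\Gamma,B,\varphi\mathrel{\Diamond\!\!\to}\psi\Rightarrow\Delta$; $\Diamond^{id}$: $E$, $\varphi\Leftrightarrow\eta$, $\sigma_1,\dots,\sigma_n,\varphi,\psi\Rightarrow\vartheta$ / $\Gamma,B,\varphi\mathrel{\Diamond\!\!\to}\psi\Rightarrow\eta\mathrel{\Diamond\!\!\to}\vartheta$; $\mathsf{mp}_\Box$: $\Gamma,\varphi\mathrel{\Box\!\!\to}\psi\Rightarrow\varphi$, $\Gamma,\varphi\mathrel{\Box\!\!\to}\psi,\psi\Rightarrow\Delta$ / $\Gamma,\varphi\mathrel{\Box\!\!\to}\psi\Rightarrow\Delta$; $\mathsf{mp}_\Diamond$: $\Gamma\Rightarrow\varphi$, $\Gamma\Rightarrow\psi$ / $\Gamma\Rightarrow\varphi\mathrel{\Diamond\!\!\to}\psi$. Calculi: $\mathsf{S.ConstCKID}$ = propositional + $\Box^{id},\Diamond^{id},\Box\Diamond^{id}$; $\mathsf{S.ConstCKMP}$ = propositional + $\Box,\Diamond,\Box\Diamond,\mathsf{mp}_\Box,\mathsf{mp}_\Diamond$;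 $\mathsf{S.ConstCKMPID}$ = propositional + $\Box^{id},\Diamond^{id},\Box\Diamond^{id},\mathsf{mp}_\Box,\mathsf{mp}_\Diamond$. *)

(* Defs.v *)
From Stdlib Require Import List Permutation.
Import ListNotations.

Inductive form : Type :=
| Var : nat -> form
| Bot : form
| And : form -> form -> form
| Or  : form -> form -> form
| Imp : form -> form -> form
| BoxArr : form -> form -> form
| DiaArr : form -> form -> form.

Definition Neg (a : form) : form := Imp a Bot.
Definition Top : form := Neg Bot.
Definition Iff (a b : form) : form := And (Imp a b) (Imp b a).

Inductive logic : Type := ConstCKID | ConstCKMP | ConstCKMPID.

Definition has_id (L : logic) : bool :=
  match L with ConstCKID | ConstCKMPID => true | ConstCKMP => false end.
Definition has_mp (L : logic) : bool :=
  match L with ConstCKMP | ConstCKMPID => true | ConstCKID => false end.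

Inductive hderiv (L : logic) : form -> Prop :=
| h_A1 a b : hderiv L (Imp a (Imp b a))
| h_A2 a b c : hderiv L (Imp (Imp a (Imp b c)) (Imp (Imp a b) (Imp a c)))
| h_A3 a b : hderiv L (Imp (And a b) a)
| h_A4 a b : hderiv L (Imp (And a b) b)
| h_A5 a b : hderiv L (Imp a (Imp b (And a b)))
| h_A6 a b : hderiv L (Imp a (Or a b))
| h_A7 a b : hderiv L (Imp b (Or a b))
| h_A8 a b c : hderiv L (Imp (Imp a c) (Imp (Imp b c) (Imp (Or a b) c)))
| h_A9 a : hderiv L (Imp Bot a)
| h_MP a b : hderiv L (Imp a b) -> hderiv L a -> hderiv L b
| h_CMbox a b c :
    hderiv L (Imp (BoxArr a (And b c)) (And (BoxArr a b) (BoxArr a c)))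
| h_CCbox a b c :
    hderiv L (Imp (And (BoxArr a b) (BoxArr a c)) (BoxArr a (And b c)))
| h_CNbox a : hderiv L (BoxArr a Top)
| h_CNdia a : hderiv L (Neg (DiaArr a Bot))
| h_CKdia a b c :
    hderiv L (Imp (BoxArr a (Imp b c)) (Imp (DiaArr a b) (DiaArr a c)))
| h_RAbox a r b : hderiv L (Iff a r) -> hderiv L (Iff (BoxArr a b) (BoxArr r b))
| h_RCbox a b c : hderiv L (Iff b c) -> hderiv L (Iff (BoxArr a b) (BoxArr a c))
| h_RAdia a r b : hderiv L (Iff a r) -> hderiv L (Iff (DiaArr a b) (DiaArr r b))
| h_RCdia a b c : hderiv L (Iff b c) -> hderiv L (Iff (DiaArr a b) (DiaArr a c))
| h_IDbox a : has_id L = true -> hderiv L (BoxArr a a)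
| h_MPbox a b : has_mp L = true -> hderiv L (Imp (BoxArr a b) (Imp a b))
| h_MPdia a b : has_mp L = true -> hderiv L (Imp (And a b) (DiaArr a b)).

(** * Sequents: antecedent is a multiset, represented by a list; every rule
    conclusion is taken up to permutation of the antecedent.  The succedent
    Δ with |Δ| ≤ 1 is an [option form]. *)

Definition big_and (G : list form) : form :=
  match G with
  | [] => Top
  | a :: l => fold_left And l a
  end.

Definition big_or (D : option form) : form :=
  match D with None => Bot | Some a => a end.

Definition iota (G : list form) (D : option form) : form :=
  match G with
  | [] => big_or D
  | _ :: _ => Imp (big_and G) (big_or D)
  end.

Definition boxes (B : list (form * form)) : list form :=
  map (fun p => BoxArr (fst p) (snd p)) B.
Definition sigmas (B : list (form * form)) : list form := map snd B.

Inductive sderiv (L : logic) : list form -> option form -> Prop :=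
| s_init G p G' :
    Permutation G' (Var p :: G) -> sderiv L G' (Some (Var p))
| s_botL G D G' :
    Permutation G' (Bot :: G) -> sderiv L G' D
| s_andL G a b D G' :
    sderiv L (a :: b :: G) D ->
    Permutation G' (And a b :: G) -> sderiv L G' D
| s_andR G a b :
    sderiv L G (Some a) -> sderiv L G (Some b) -> sderiv L G (Some (And a b))
| s_orL G a b D G' :
    sderiv L (a :: G) D -> sderiv L (b :: G) D ->
    Permutation G' (Or a b :: G) -> sderiv L G' D
| s_orR1 G a b : sderiv L G (Some a) -> sderiv L G (Some (Or a b))
| s_orR2 G a b : sderiv L G (Some b) -> sderiv L G (Some (Or a b))
| s_impR G a b : sderiv L (a :: G) (Some b) -> sderiv L G (Some (Imp a b))
| s_impL G a b D G' :
    sderiv L (Imp a b :: G) (Some a) -> sderiv L (b :: G) D ->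
    Permutation G' (Imp a b :: G) -> sderiv L G' D
| s_box G B a b G' :
    has_id L = false ->
    (forall r s, In (r, s) B -> sderiv L [a] (Some r) /\ sderiv L [r] (Some a)) ->
    sderiv L (sigmas B) (Some b) ->
    Permutation G' (G ++ boxes B) -> sderiv L G' (Some (BoxArr a b))
| s_dia G B a b e t G' :
    has_id L = false ->
    (forall r s, In (r, s) B -> sderiv L [a] (Some r) /\ sderiv L [r] (Some a)) ->
    sderiv L [a] (Some e) -> sderiv L [e] (Some a) ->
    sderiv L (sigmas B ++ [b]) (Some t) ->
    Permutation G' (G ++ boxes B ++ [DiaArr a b]) -> sderiv L G' (Some (DiaArr e t))
| s_boxdia G B a b D G' :
    has_id L = false ->
    (forall r s, In (r, s) B -> sderiv L [a] (Some r) /\ sderiv L [r] (Some a)) ->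
    sderiv L (sigmas B ++ [b]) None ->
    Permutation G' (G ++ boxes B ++ [DiaArr a b]) -> sderiv L G' D
| s_box_id G B a b G' :
    has_id L = true ->
    (forall r s, In (r, s) B -> sderiv L [a] (Some r) /\ sderiv L [r] (Some a)) ->
    sderiv L (sigmas B ++ [a]) (Some b) ->
    Permutation G' (G ++ boxes B) -> sderiv L G' (Some (BoxArr a b))
| s_dia_id G B a b e t G' :
    has_id L = true ->
    (forall r s, In (r, s) B -> sderiv L [a] (Some r) /\ sderiv L [r] (Some a)) ->
    sderiv L [a] (Some e) -> sderiv L [e] (Some a) ->
    sderiv L (sigmas B ++ [a; b]) (Some t) ->
    Permutation G' (G ++ boxes B ++ [DiaArr a b]) -> sderiv L G' (Some (DiaArr e t))
| s_boxdia_id G B a b D G' :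
    has_id L = true ->
    (forall r s, In (r, s) B -> sderiv L [a] (Some r) /\ sderiv L [r] (Some a)) ->
    sderiv L (sigmas B ++ [a; b]) None ->
    Permutation G' (G ++ boxes B ++ [DiaArr a b]) -> sderiv L G' D
| s_mp_box G a b D G' :
    has_mp L = true ->
    sderiv L (BoxArr a b :: G) (Some a) ->
    sderiv L (BoxArr a b :: b :: G) D ->
    Permutation G' (BoxArr a b :: G) -> sderiv L G' D
| s_mp_dia G a b :
    has_mp L = true ->
    sderiv L G (Some a) -> sderiv L G (Some b) -> sderiv L G (Some (DiaArr a b)).

(* Main.v *)
Require Import Defs.
From Stdlib Require Import List Permutation Lia.
Import ListNotations.

Arguments boxes : simpl never.
Arguments sigmas : simpl never.

Definition form_eq_dec : forall x y : form, {x = y} + {x <> y}.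
Proof. decide equality; apply PeanoNat.Nat.eq_dec. Defined.

Lemma boxes_cons p B : boxes (p :: B) = BoxArr (fst p) (snd p) :: boxes B.
Proof. reflexivity. Qed.
Lemma boxes_app B1 B2 : boxes (B1 ++ B2) = boxes B1 ++ boxes B2.
Proof. unfold boxes; apply map_app. Qed.
Lemma sigmas_cons p B : sigmas (p :: B) = snd p :: sigmas B.
Proof. reflexivity. Qed.
Lemma sigmas_app B1 B2 : sigmas (B1 ++ B2) = sigmas B1 ++ sigmas B2.
Proof. unfold sigmas; apply map_app. Qed.
Lemma boxes_nil : boxes [] = []. Proof. reflexivity. Qed.
Lemma sigmas_nil : sigmas [] = []. Proof. reflexivity. Qed.

Lemma cnt_cons x l y : count_occ form_eq_dec (x :: l) y = (if form_eq_dec x y then 1 else 0) + count_occ form_eq_dec l y.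
Proof. simpl. destruct (form_eq_dec x y); lia. Qed.
Lemma cnt_app l1 l2 y : count_occ form_eq_dec (l1 ++ l2) y = count_occ form_eq_dec l1 y + count_occ form_eq_dec l2 y.
Proof. apply count_occ_app. Qed.
Lemma cnt_nil y : count_occ form_eq_dec [] y = 0.
Proof. reflexivity. Qed.

Ltac perm :=
  rewrite ?boxes_app, ?sigmas_app, ?boxes_cons, ?sigmas_cons, ?boxes_nil, ?sigmas_nil in *; cbn [fst snd] in *;
  apply (proj2 (Permutation_count_occ form_eq_dec _ _)); let y := fresh "y" in intro y;
  repeat match goal with
         | H : Permutation _ _ |- _ =>
             let H' := fresh in
             pose proof (proj1 (Permutation_count_occ form_eq_dec _ _) H y) as H'; clear H; revert H'
         | H : Permutation _ _ |- _ => clear H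
         end;
  repeat rewrite ?cnt_cons, ?cnt_app, ?cnt_nil;
  repeat match goal with
         | |- context [form_eq_dec ?a ?b] => destruct (form_eq_dec a b)
         end; intros; lia.

Lemma test (a b : form) G H B : Permutation G (a :: H) -> Permutation (b :: G ++ boxes B) (boxes B ++ H ++ [a; b]).
Proof. intros. perm. Qed.
Lemma sperm L G D : sderiv L G D -> forall G', Permutation G G' -> sderiv L G' D.
Proof.
  induction 1; intros G'' HP.
  - eapply (s_init _ G). perm.
  - eapply (s_botL _ G). perm.
  - eapply (s_andL _ G); [eassumption|perm].
  - apply s_andR; auto.
  - eapply (s_orL _ G a b); [eassumption|eassumption|perm].
  - apply s_orR1; auto.
  - apply s_orR2; auto.
  - apply s_impR; apply IHsderiv; perm.
  - eapply (s_impL _ G); [eassumption|eassumption|perm].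
  - eapply (s_box _ G); [eassumption|eassumption|eassumption|perm].
  - eapply (s_dia _ G); try eassumption; perm.
  - eapply (s_boxdia _ G); try eassumption; perm.
  - eapply (s_box_id _ G); try eassumption; perm.
  - eapply (s_dia_id _ G); try eassumption; perm.
  - eapply (s_boxdia_id _ G); try eassumption; perm.
  - eapply (s_mp_box _ G); try eassumption; perm.
  - apply s_mp_dia; auto.
Qed.

Lemma wk1 L G D : sderiv L G D -> forall x, sderiv L (x :: G) D.
Proof.
  induction 1; intros x.
  - eapply (s_init _ (x :: G)). perm.
  - eapply (s_botL _ (x :: G)). perm.
  - eapply (s_andL _ (x :: G) a b); [eapply sperm; [apply (IHsderiv x)|perm]|perm].
  - apply s_andR; auto.
  - eapply (s_orL _ (x :: G) a b); [eapply sperm; [apply (IHsderiv1 x)|perm]|eapply sperm; [apply (IHsderiv2 x)|perm]|perm].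
  - apply s_orR1; auto.
  - apply s_orR2; auto.
  - apply s_impR; eapply sperm; [apply (IHsderiv x)|perm].
  - eapply (s_impL _ (x :: G) a b); [eapply sperm; [apply (IHsderiv1 x)|perm]|eapply sperm; [apply (IHsderiv2 x)|perm]|perm].
  - eapply (s_box _ (x :: G)); try eassumption; perm.
  - eapply (s_dia _ (x :: G)); try eassumption; perm.
  - eapply (s_boxdia _ (x :: G)); try eassumption; perm.
  - eapply (s_box_id _ (x :: G)); try eassumption; perm.
  - eapply (s_dia_id _ (x :: G)); try eassumption; perm.
  - eapply (s_boxdia_id _ (x :: G)); try eassumption; perm.
  - eapply (s_mp_box _ (x :: G) a b); [assumption|eapply sperm; [apply (IHsderiv1 x)|perm]|eapply sperm; [apply (IHsderiv2 x)|perm]|perm].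
  - apply s_mp_dia; auto.
Qed.

Lemma wkl L G D H : sderiv L G D -> sderiv L (H ++ G) D.
Proof. intros Hd; induction H; simpl; auto using wk1. Qed.

Lemma wkr L G D H : sderiv L G D -> sderiv L (G ++ H) D.
Proof. intros Hd; eapply sperm; [apply (wkl _ _ _ H Hd)|perm]. Qed.

Lemma rwk L G D : sderiv L G None -> sderiv L G D.
Proof.
  intros Hd; remember None as N; revert HeqN; induction Hd; intros E; try discriminate.
  - eapply s_botL; eassumption.
  - eapply (s_andL _ G a b); eauto.
  - eapply (s_orL _ G a b); eauto.
  - eapply (s_impL _ G a b); eauto.
  - eapply s_boxdia; eassumption.
  - eapply s_boxdia_id; eassumption.
  - eapply (s_mp_box _ G a b); eauto.
Qed.

Definition idl L (a : form) : list form := if has_id L then [a] else [].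

Lemma ident L a : forall G, sderiv L (a :: G) (Some a).
Proof.
  induction a; intros G.
  - eapply s_init; reflexivity.
  - eapply s_botL; reflexivity.
  - eapply s_andL; [|reflexivity]. apply s_andR; auto.
    eapply sperm; [apply (IHa2 (a1 :: G))|perm].
  - eapply s_orL; [| |reflexivity].
    + apply s_orR1; auto.
    + apply s_orR2; auto.
  - apply s_impR. eapply (s_impL _ (a1 :: G) a1 a2); [| |perm].
    + eapply sperm; [apply (IHa1 (Imp a1 a2 :: G))|perm].
    + apply IHa2.
  - destruct (has_id L) eqn:E.
    + eapply (s_box_id _ G [(a1, a2)]); auto.
      * intros r s [Hr|[]]; inversion Hr; subst; auto.
      * apply IHa2.
      * perm.
    + eapply (s_box _ G [(a1, a2)]); auto.
      * intros r s [Hr|[]]; inversion Hr; subst; auto.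
      * apply IHa2.
      * perm.
  - destruct (has_id L) eqn:E.
    + eapply (s_dia_id _ G [] a1 a2); auto.
      * intros r s [].
      * eapply sperm; [apply (IHa2 [a1])|perm].
      * perm.
    + eapply (s_dia _ G [] a1 a2); auto.
      * intros r s [].
      * apply IHa2.
      * perm.
Qed.

Lemma pcc {X A : form} {G0 H : list form} : Permutation (X :: G0) (A :: H) ->
  (X = A /\ Permutation G0 H) \/ (exists K, Permutation G0 (A :: K) /\ Permutation H (X :: K)).
Proof.
  intros HP. destruct (form_eq_dec X A) as [->|Hne].
  - left; split; auto. eapply Permutation_cons_inv; eauto.
  - right. assert (Hin : In A (X :: G0)) by (apply (Permutation_in _ (Permutation_sym HP)); now left).
    destruct Hin as [->|Hin]; [congruence|].
    destruct (in_split _ _ Hin) as (l1 & l2 & ->).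
    exists (l1 ++ l2); split; [perm|].
    assert (Permutation (A :: H) (A :: X :: l1 ++ l2)) by (eapply Permutation_trans; [apply Permutation_sym, HP|perm]).
    apply Permutation_cons_inv in H0. exact H0.
Qed.

Lemma in_boxes x B : In x (boxes B) -> exists r s, x = BoxArr r s /\ In (r, s) B.
Proof.
  unfold boxes; intros H. apply in_map_iff in H as ([r s] & <- & Hin). exists r, s; auto.
Qed.

Lemma locate {G' G R : list form} {A : form} {H : list form} : Permutation G' (G ++ R) -> Permutation G' (A :: H) -> ~ In A R ->
  exists G0, Permutation G (A :: G0) /\ Permutation H (G0 ++ R).
Proof.
  intros H1 H2 Hn.
  assert (Hin : In A (G ++ R)) by (apply (Permutation_in _ H1); apply (Permutation_in _ (Permutation_sym H2)); now left).
  apply in_app_or in Hin as [Hin|Hin]; [|contradiction].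
  destruct (in_split _ _ Hin) as (l1 & l2 & ->).
  exists (l1 ++ l2); split; [perm|].
  assert (Permutation (A :: H) (A :: (l1 ++ l2) ++ R)) by (eapply Permutation_trans; [apply Permutation_sym, H2|eapply Permutation_trans; [apply H1|perm]]).
  apply Permutation_cons_inv in H0. exact H0.
Qed.

Definition nonmodal A := match A with And _ _ | Or _ _ | Imp _ _ => True | _ => False end.

Lemma nm_boxes A B : nonmodal A -> ~ In A (boxes B).
Proof. intros HA Hin. apply in_boxes in Hin as (r & s & -> & _). exact HA. Qed.
Lemma nm_boxes_dia A B c d : nonmodal A -> ~ In A (boxes B ++ [DiaArr c d]).
Proof. intros HA Hin. apply in_app_or in Hin as [Hin|[<-|[]]]; [eapply nm_boxes; eauto|exact HA]. Qed.

Definition lprem L A G0 D : Prop := match A with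
 | And a b => sderiv L (a :: b :: G0) D
 | Or a b => sderiv L (a :: G0) D /\ sderiv L (b :: G0) D
 | Imp a b => sderiv L (Imp a b :: G0) (Some a) /\ sderiv L (b :: G0) D
 | _ => False end.

Ltac pc HP HG := let H := fresh in pose proof (Permutation_trans (Permutation_sym HP) HG) as H;
  destruct (pcc H) as [[? ?]|(K & ? & ?)].

Ltac modal_case c Ys :=
  match goal with HP : Permutation ?G' (?G ++ ?R), HG : Permutation ?G' (_ :: _) |- _ =>
    let G0 := fresh "G0" in
    destruct (locate HP HG ltac:(first [apply nm_boxes | apply nm_boxes_dia]; assumption)) as (G0 & ? & ?);
    eapply (c _ (Ys ++ G0)); try eassumption; perm
  end.

Lemma inv_gen L A (Ys : list form) (HA : nonmodal A) (Hp : forall (G0 : list form) (D : option form), lprem L A G0 D -> sderiv L (Ys ++ G0) D) :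
  forall G D, sderiv L G D -> forall H, Permutation G (A :: H) -> sderiv L (Ys ++ H) D.
Proof.
  induction 1; intros HH HG.
  - pc H HG; [subst; contradiction|]. eapply (s_init _ (Ys ++ K)). perm.
  - pc H HG; [subst; contradiction|]. eapply (s_botL _ (Ys ++ K)). perm.
  - pc H0 HG.
    + subst. apply Hp. simpl. eapply sperm; [eassumption|perm].
    + eapply (s_andL _ (Ys ++ K) a b); [|perm]. eapply sperm; [apply (IHsderiv (a :: b :: K))|]; perm.
  - apply s_andR; auto.
  - pc H1 HG.
    + subst. apply Hp. simpl. split; [eapply sperm; [exact H|perm]|eapply sperm; [exact H0|perm]].
    + eapply (s_orL _ (Ys ++ K) a b); [| |perm].
      * eapply sperm; [apply (IHsderiv1 (a :: K))|]; perm.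
      * eapply sperm; [apply (IHsderiv2 (b :: K))|]; perm.
  - apply s_orR1; auto.
  - apply s_orR2; auto.
  - apply s_impR. eapply sperm; [apply (IHsderiv (a :: HH))|]; perm.
  - pc H1 HG.
    + subst. apply Hp. simpl. split; [eapply sperm; [exact H|perm]|eapply sperm; [exact H0|perm]].
    + eapply (s_impL _ (Ys ++ K) a b); [| |perm].
      * eapply sperm; [apply (IHsderiv1 (Imp a b :: K))|]; perm.
      * eapply sperm; [apply (IHsderiv2 (b :: K))|]; perm.
  - modal_case s_box Ys.
  - modal_case s_dia Ys.
  - modal_case s_boxdia Ys.
  - modal_case s_box_id Ys.
  - modal_case s_dia_id Ys.
  - modal_case s_boxdia_id Ys.
  - pc H2 HG; [subst; contradiction|].
    eapply (s_mp_box _ (Ys ++ K) a b); [assumption| | |perm].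
    + eapply sperm; [apply (IHsderiv1 (BoxArr a b :: K))|]; perm.
    + eapply sperm; [apply (IHsderiv2 (BoxArr a b :: b :: K))|]; perm.
  - apply s_mp_dia; auto.
Qed.

Lemma inv_and L a b G D : sderiv L (And a b :: G) D -> sderiv L (a :: b :: G) D.
Proof. intros H. apply (inv_gen L (And a b) [a; b] I (fun G0 D0 h => h) _ _ H). reflexivity. Qed.
Lemma inv_orl L a b G D : sderiv L (Or a b :: G) D -> sderiv L (a :: G) D.
Proof. intros H. apply (inv_gen L (Or a b) [a] I (fun G0 D0 h => proj1 h) _ _ H). reflexivity. Qed.
Lemma inv_orr L a b G D : sderiv L (Or a b :: G) D -> sderiv L (b :: G) D.
Proof. intros H. apply (inv_gen L (Or a b) [b] I (fun G0 D0 h => proj2 h) _ _ H). reflexivity. Qed.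
Lemma inv_imp L a b G D : sderiv L (Imp a b :: G) D -> sderiv L (b :: G) D.
Proof. intros H. apply (inv_gen L (Imp a b) [b] I (fun G0 D0 h => proj2 h) _ _ H). reflexivity. Qed.

Definition Eqv L a (B : list (form * form)) := forall r s : form, In (r, s) B -> sderiv L [a] (Some r) /\ sderiv L [r] (Some a).

Lemma idl_f L a : has_id L = false -> idl L a = [].
Proof. unfold idl; intros ->; reflexivity. Qed.
Lemma idl_t L a : has_id L = true -> idl L a = [a].
Proof. unfold idl; intros ->; reflexivity. Qed.

Lemma box_u L G B a b G' : Eqv L a B -> sderiv L (sigmas B ++ idl L a) (Some b) ->
  Permutation G' (G ++ boxes B) -> sderiv L G' (Some (BoxArr a b)).
Proof.
  intros HE Hp HP. destruct (has_id L) eqn:E.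
  - eapply s_box_id; eauto. rewrite idl_t in Hp; auto.
  - eapply s_box; eauto. rewrite idl_f, app_nil_r in Hp; auto.
Qed.

Lemma dia_u L G B a b e t G' : Eqv L a B -> sderiv L [a] (Some e) -> sderiv L [e] (Some a) ->
  sderiv L (sigmas B ++ idl L a ++ [b]) (Some t) ->
  Permutation G' (G ++ boxes B ++ [DiaArr a b]) -> sderiv L G' (Some (DiaArr e t)).
Proof.
  intros HE H1 H2 Hp HP. destruct (has_id L) eqn:E.
  - eapply s_dia_id; eauto. rewrite idl_t in Hp; auto.
  - eapply s_dia; eauto. rewrite idl_f in Hp; auto.
Qed.

Lemma boxdia_u L G B a b D G' : Eqv L a B ->
  sderiv L (sigmas B ++ idl L a ++ [b]) None ->
  Permutation G' (G ++ boxes B ++ [DiaArr a b]) -> sderiv L G' D.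
Proof.
  intros HE Hp HP. destruct (has_id L) eqn:E.
  - eapply s_boxdia_id; eauto. rewrite idl_t in Hp; auto.
  - eapply s_boxdia; eauto. rewrite idl_f in Hp; auto.
Qed.

Definition isub B A := match A with
 | And a b | Or a b | Imp a b | BoxArr a b | DiaArr a b => B = a \/ B = b
 | _ => False end.

Definition CONTR L A := forall G D, sderiv L G D -> forall H, Permutation G (A :: A :: H) -> sderiv L (A :: H) D.

Lemma pcc2 {X A : form} {G0 H : list form} : Permutation (X :: G0) (A :: A :: H) ->
  (X = A /\ Permutation G0 (A :: H)) \/ (exists K, Permutation G0 (A :: A :: K) /\ Permutation H (X :: K)).
Proof.
  intros HP. destruct (pcc HP) as [[-> ?]|(K1 & H1 & H2)]; [left; auto|].
  destruct (form_eq_dec X A) as [->|Hne]; [left; split; auto; eapply Permutation_cons_inv; eapply Permutation_trans; [apply HP|]; perm|].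
  right. destruct (pcc (Permutation_sym H2)) as [[? ?]|(K & H3 & H4)]; [congruence|].
  exists K; split; perm.
Qed.

Lemma loc2 {G' G R : list form} {A : form} {H : list form} : Permutation G' (G ++ R) -> Permutation G' (A :: A :: H) ->
  (exists G0, Permutation G (A :: G0) /\ Permutation (A :: H) (G0 ++ R)) \/
  (exists R0, Permutation R (A :: A :: R0) /\ Permutation H (G ++ R0)).
Proof.
  intros H1 H2.
  assert (Hin : In A (G ++ R)) by (apply (Permutation_in _ H1); apply (Permutation_in _ (Permutation_sym H2)); now left).
  apply in_app_or in Hin as [Hin|Hin].
  - left. destruct (in_split _ _ Hin) as (l1 & l2 & ->).
    exists (l1 ++ l2); split; [perm|].
    assert (Permutation (A :: A :: H) (A :: (l1 ++ l2) ++ R)) by (eapply Permutation_trans; [apply Permutation_sym, H2|eapply Permutation_trans; [apply H1|perm]]).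
    apply Permutation_cons_inv in H0. exact H0.
  - destruct (in_split _ _ Hin) as (l1 & l2 & ->).
    assert (H3 : Permutation (A :: A :: H) (A :: G ++ l1 ++ l2)) by (eapply Permutation_trans; [apply Permutation_sym, H2|eapply Permutation_trans; [apply H1|perm]]).
    apply Permutation_cons_inv in H3.
    assert (Hin2 : In A (G ++ l1 ++ l2)) by (apply (Permutation_in _ H3); now left).
    apply in_app_or in Hin2 as [Hin2|Hin2].
    + left. destruct (in_split _ _ Hin2) as (m1 & m2 & ->).
      exists (m1 ++ m2); split; [perm|]. perm.
    + right. destruct (in_split _ _ Hin2) as (m1 & m2 & Heq).
      exists (m1 ++ m2). rewrite Heq in *. split; [perm|].
      apply Permutation_cons_inv with A. eapply Permutation_trans; [apply H3|perm].
Qed.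

Lemma in_boxes_perm r s B : In (BoxArr r s) (boxes B) -> exists B0, Permutation B ((r, s) :: B0).
Proof.
  intros H. apply in_boxes in H as (r' & s' & Heq & Hin). inversion Heq; subst.
  destruct (in_split _ _ Hin) as (l1 & l2 & ->). exists (l1 ++ l2).
  apply Permutation_sym, Permutation_middle.
Qed.

Lemma perm_boxes B B' : Permutation B B' -> Permutation (boxes B) (boxes B').
Proof. apply Permutation_map. Qed.
Lemma perm_sigmas B B' : Permutation B B' -> Permutation (sigmas B) (sigmas B').
Proof. apply Permutation_map. Qed.

Lemma boxes2 {B T A R0} : Permutation (boxes B ++ T) (A :: A :: R0) ->
  (T = [] \/ exists c d, T = [DiaArr c d]) ->
  exists r s B0, A = BoxArr r s /\ Permutation B ((r, s) :: (r, s) :: B0) /\ Permutation R0 (boxes B0 ++ T).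
Proof.
  intros HP HT.
  assert (HnT : forall r s, ~ In (BoxArr r s) T) by (intros r s Hin; destruct HT as [->|(c & d & ->)]; simpl in Hin; intuition discriminate).
  assert (Hin : In A (boxes B ++ T)) by (apply (Permutation_in _ (Permutation_sym HP)); now left).
  apply in_app_or in Hin as [Hin|Hin].
  - pose proof Hin as Hb. apply in_boxes in Hb as (r & s & -> & _).
    destruct (in_boxes_perm _ _ _ Hin) as (B1 & HB1).
    assert (H2 : Permutation (BoxArr r s :: boxes B1 ++ T) (BoxArr r s :: BoxArr r s :: R0)).
    { eapply Permutation_trans; [|apply HP]. pose proof (perm_boxes _ _ HB1). perm. }
    apply Permutation_cons_inv in H2.
    assert (Hin2 : In (BoxArr r s) (boxes B1 ++ T)) by (apply (Permutation_in _ (Permutation_sym H2)); now left).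
    apply in_app_or in Hin2 as [Hin2|Hin2]; [|exfalso; eapply HnT; eauto].
    destruct (in_boxes_perm _ _ _ Hin2) as (B0 & HB0).
    exists r, s, B0. split; [reflexivity|split].
    + eapply Permutation_trans; [apply HB1|]. constructor. exact HB0.
    + apply Permutation_cons_inv with (BoxArr r s). eapply Permutation_trans; [apply Permutation_sym, H2|].
      pose proof (perm_boxes _ _ HB0). perm.
  - exfalso. destruct HT as [->|(c & d & ->)]; [destruct Hin|].
    destruct Hin as [<-|[]].
    assert (H2 : Permutation (DiaArr c d :: boxes B) (DiaArr c d :: DiaArr c d :: R0)) by (eapply Permutation_trans; [|apply HP]; perm).
    apply Permutation_cons_inv in H2.
    assert (Hin2 : In (DiaArr c d) (boxes B)) by (apply (Permutation_in _ (Permutation_sym H2)); now left).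
    apply in_boxes in Hin2 as (? & ? & ? & _); discriminate.
Qed.

Lemma contr_B L r s B B0 (Hs : CONTR L s) X D : Permutation B ((r, s) :: (r, s) :: B0) ->
  sderiv L (sigmas B ++ X) D -> sderiv L (sigmas ((r, s) :: B0) ++ X) D.
Proof.
  intros HB Hd. pose proof (perm_sigmas _ _ HB) as HS.
  rewrite sigmas_cons; cbn [snd]. apply (Hs _ _ Hd (sigmas B0 ++ X)). perm.
Qed.

Lemma Eqv_sub L a B B' : Eqv L a B -> incl B' B -> Eqv L a B'.
Proof. intros HE Hi r s Hin. apply (HE r s), Hi, Hin. Qed.

Ltac mc c u IHs a b :=
  match goal with HP : Permutation ?G' (?G ++ ?R), HG : Permutation ?G' (_ :: _ :: _) |- _ =>
    let G0 := fresh "G0" in let R0 := fresh "R0" in let HR := fresh "HR" in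
    destruct (loc2 HP HG) as [(G0 & ? & ?)|(R0 & HR & ?)];
    [ eapply (c _ G0); try eassumption; perm
    | let r := fresh "r" in let s := fresh "s" in let B0 := fresh "B0" in let HB := fresh "HB" in
      first [ rewrite <- (app_nil_r (boxes _)) in HR; destruct (boxes2 HR (or_introl eq_refl)) as (r & s & B0 & -> & HB & ?)
            | destruct (boxes2 HR (or_intror (ex_intro _ _ (ex_intro _ _ eq_refl)))) as (r & s & B0 & -> & HB & ?) ];
      eapply (u _ G ((r, s) :: B0) a b);
      [ eapply Eqv_sub; [eassumption| intros ? ?; apply (Permutation_in _ (Permutation_sym HB)); simpl in *; tauto]
      | .. ];
      try eassumption;
      try (first [rewrite idl_f by assumption | rewrite idl_t by assumption]; simpl;
           eapply (contr_B _ r s _ B0); [apply IHs; simpl; auto | exact HB | rewrite ?app_nil_r; assumption]);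
      try perm ]
  end.

Lemma contr_step L A (IHs : forall B, isub B A -> CONTR L B) : CONTR L A.
Proof.
  intros G D Hd. induction Hd; intros HH HG.
  - pose proof (Permutation_trans (Permutation_sym H) HG) as H1.
    destruct (pcc2 H1) as [[<- ?]|(K & ? & ?)].
    + eapply (s_init _ HH). reflexivity.
    + eapply (s_init _ (A :: K)). perm.
  - pose proof (Permutation_trans (Permutation_sym H) HG) as H1.
    destruct (pcc2 H1) as [[<- ?]|(K & ? & ?)].
    + eapply (s_botL _ HH). reflexivity.
    + eapply (s_botL _ (A :: K)). perm.
  - pose proof (Permutation_trans (Permutation_sym H) HG) as H1.
    destruct (pcc2 H1) as [[<- ?]|(K & ? & ?)].
    + eapply (s_andL _ HH a b); [|reflexivity].
      assert (Hx0 : sderiv L (And a b :: a :: b :: HH) D) by (eapply sperm; [exact Hd|perm]).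
      assert (Hx : sderiv L (a :: b :: a :: b :: HH) D) by (apply inv_and in Hx0; eapply sperm; [exact Hx0|perm]).
      assert (Hy : sderiv L (a :: b :: b :: HH) D) by (apply (IHs a (or_introl eq_refl) _ _ Hx (b :: b :: HH)); perm).
      eapply sperm; [apply (IHs b (or_intror eq_refl) _ _ Hy (a :: HH))|]; perm.
    + eapply (s_andL _ (A :: K) a b); [|perm].
      eapply sperm; [apply (IHHd (a :: b :: K))|]; perm.
  - apply s_andR; auto.
  - pose proof (Permutation_trans (Permutation_sym H) HG) as H1.
    destruct (pcc2 H1) as [[<- ?]|(K & ? & ?)].
    + eapply (s_orL _ HH a b); [| |reflexivity].
      * assert (Hx : sderiv L (a :: a :: HH) D).
        { apply inv_orl with b. eapply sperm; [exact Hd1|]. perm. }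
        apply (IHs a (or_introl eq_refl) _ _ Hx); perm.
      * assert (Hx : sderiv L (b :: b :: HH) D).
        { apply inv_orr with a. eapply sperm; [exact Hd2|]. perm. }
        apply (IHs b (or_intror eq_refl) _ _ Hx); perm.
    + eapply (s_orL _ (A :: K) a b); [| |perm].
      * eapply sperm; [apply (IHHd1 (a :: K))|]; perm.
      * eapply sperm; [apply (IHHd2 (b :: K))|]; perm.
  - apply s_orR1; auto.
  - apply s_orR2; auto.
  - apply s_impR. eapply sperm; [apply (IHHd (a :: HH))|]; perm.
  - pose proof (Permutation_trans (Permutation_sym H) HG) as H1.
    destruct (pcc2 H1) as [[<- ?]|(K & ? & ?)].
    + eapply (s_impL _ HH a b); [| |reflexivity].
      * apply IHHd1. perm.
      * assert (Hx : sderiv L (b :: b :: HH) D).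
        { apply inv_imp with a. eapply sperm; [exact Hd2|]. perm. }
        apply (IHs b (or_intror eq_refl) _ _ Hx); perm.
    + eapply (s_impL _ (A :: K) a b); [| |perm].
      * eapply sperm; [apply (IHHd1 (Imp a b :: K))|]; perm.
      * eapply sperm; [apply (IHHd2 (b :: K))|]; perm.
  - mc s_box box_u IHs a b.
  - mc s_dia dia_u IHs a b.
  - mc s_boxdia boxdia_u IHs a b.
  - mc s_box_id box_u IHs a b.
  - mc s_dia_id dia_u IHs a b.
  - mc s_boxdia_id boxdia_u IHs a b.
  - pose proof (Permutation_trans (Permutation_sym H0) HG) as H1.
    destruct (pcc2 H1) as [[<- ?]|(K & ? & ?)].
    + eapply (s_mp_box _ HH a b); [assumption| | |reflexivity].
      * apply IHHd1. perm.
      * eapply sperm; [apply (IHHd2 (b :: HH))|]; perm.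
    + eapply (s_mp_box _ (A :: K) a b); [assumption| | |perm].
      * eapply sperm; [apply (IHHd1 (BoxArr a b :: K))|]; perm.
      * eapply sperm; [apply (IHHd2 (BoxArr a b :: b :: K))|]; perm.
  - apply s_mp_dia; auto.
Qed.

Lemma contr L A : CONTR L A.
Proof.
  induction A; apply contr_step; simpl; intros B HB;
    try contradiction; destruct HB; subst; auto.
Qed.

Lemma mono L G D : sderiv L G D -> forall G', incl G G' -> sderiv L G' D.
Proof.
  intros Hd G' Hi.
  assert (Hm : forall K, incl K G' -> sderiv L (G' ++ K) D -> sderiv L G' D).
  { induction K as [|x K IH]; intros HK Hx.
    - rewrite app_nil_r in Hx; exact Hx.
    - apply IH; [intros y Hy; apply HK; right; exact Hy|].
      assert (Hin : In x G') by (apply HK; left; reflexivity).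
      destruct (in_split _ _ Hin) as (l1 & l2 & Heq).
      eapply sperm; [apply (contr L x (G' ++ x :: K) D Hx ((l1 ++ l2) ++ K))|].
      + rewrite Heq. perm.
      + rewrite Heq. perm. }
  apply (Hm G Hi). apply wkl. exact Hd.
Qed.

Lemma ax L a G : In a G -> sderiv L G (Some a).
Proof. intros H. apply (mono _ _ _ (ident L a [])). intros x [<-|[]]; auto. Qed.

Lemma incl_split {x : form} {G} : In x G -> exists G0, Permutation G (x :: G0) /\ incl G (x :: G0) /\ incl (x :: G0) G.
Proof.
  intros H. destruct (in_split _ _ H) as (l1 & l2 & ->). exists (l1 ++ l2).
  assert (P : Permutation (l1 ++ x :: l2) (x :: l1 ++ l2)) by perm.
  split; [exact P|split]; intros y Hy; [apply (Permutation_in _ P)|apply (Permutation_in _ (Permutation_sym P))]; auto.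
Qed.

Ltac incl_tac := let x := fresh in let Hx := fresh in intros x Hx;
  repeat match goal with H : incl _ _ |- _ => specialize (H x); revert H end;
  simpl in *; repeat rewrite in_app_iff in *; simpl in *; intros; tauto.

Lemma botS L G D : In Bot G -> sderiv L G D.
Proof. intros H. destruct (incl_split H) as (G0 & P & _). eapply s_botL; exact P. Qed.

Lemma andLS L a b G D : In (And a b) G -> sderiv L (a :: b :: G) D -> sderiv L G D.
Proof.
  intros H Hd. destruct (incl_split H) as (G0 & P & _).
  eapply (s_andL _ G0 a b); [|exact P].
  assert (H1 : sderiv L (And a b :: a :: b :: G0) D) by (eapply sperm; [exact Hd|perm]).
  apply inv_and in H1. eapply mono; [exact H1|incl_tac].
Qed.

Lemma orLS L a b G D : In (Or a b) G -> sderiv L (a :: G) D -> sderiv L (b :: G) D -> sderiv L G D.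
Proof.
  intros H Hd1 Hd2. destruct (incl_split H) as (G0 & P & _).
  eapply (s_orL _ G0 a b); [| |exact P].
  - assert (H1 : sderiv L (Or a b :: a :: G0) D) by (eapply sperm; [exact Hd1|perm]).
    apply inv_orl in H1. eapply mono; [exact H1|incl_tac].
  - assert (H1 : sderiv L (Or a b :: b :: G0) D) by (eapply sperm; [exact Hd2|perm]).
    apply inv_orr in H1. eapply mono; [exact H1|incl_tac].
Qed.

Lemma impLS L a b G D : In (Imp a b) G -> sderiv L G (Some a) -> sderiv L (b :: G) D -> sderiv L G D.
Proof.
  intros H Hd1 Hd2. destruct (incl_split H) as (G0 & P & _).
  eapply (s_impL _ G0 a b); [| |exact P].
  - eapply sperm; [exact Hd1|exact P].
  - assert (H1 : sderiv L (Imp a b :: b :: G0) D) by (eapply sperm; [exact Hd2|perm]).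
    apply inv_imp in H1. eapply mono; [exact H1|incl_tac].
Qed.

Lemma mpboxS L a b G D : has_mp L = true -> In (BoxArr a b) G -> sderiv L G (Some a) -> sderiv L (b :: G) D -> sderiv L G D.
Proof.
  intros Hm H Hd1 Hd2. destruct (incl_split H) as (G0 & P & _).
  eapply (s_mp_box _ G0 a b); [exact Hm| | |exact P].
  - eapply sperm; [exact Hd1|exact P].
  - eapply sperm; [exact Hd2|perm].
Qed.

Definition BIn (B : list (form * form)) G := forall r s, In (r, s) B -> In (BoxArr r s) G.

Lemma boxS L B a b G : BIn B G -> Eqv L a B -> sderiv L (sigmas B ++ idl L a) (Some b) -> sderiv L G (Some (BoxArr a b)).
Proof.
  intros Hb HE Hd. eapply mono; [eapply (box_u _ G B a b); eauto|].
  intros x Hx. apply in_app_or in Hx as [Hx|Hx]; auto.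
  apply in_boxes in Hx as (r & s & -> & Hin). auto.
Qed.

Lemma diaS L B a b e t G : In (DiaArr a b) G -> BIn B G -> Eqv L a B -> sderiv L [a] (Some e) -> sderiv L [e] (Some a) ->
  sderiv L (sigmas B ++ idl L a ++ [b]) (Some t) -> sderiv L G (Some (DiaArr e t)).
Proof.
  intros Hd Hb HE H1 H2 Hp. eapply mono; [eapply (dia_u _ G B a b); eauto|].
  intros x Hx. apply in_app_or in Hx as [Hx|Hx]; auto.
  apply in_app_or in Hx as [Hx|[<-|[]]]; auto.
  apply in_boxes in Hx as (r & s & -> & Hin). auto.
Qed.

Lemma boxdiaS L B a b D G : In (DiaArr a b) G -> BIn B G -> Eqv L a B ->
  sderiv L (sigmas B ++ idl L a ++ [b]) None -> sderiv L G D.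
Proof.
  intros Hd Hb HE Hp. eapply mono; [eapply (boxdia_u _ G B a b); eauto|].
  intros x Hx. apply in_app_or in Hx as [Hx|Hx]; auto.
  apply in_app_or in Hx as [Hx|[<-|[]]]; auto.
  apply in_boxes in Hx as (r & s & -> & Hin). auto.
Qed.

Lemma BIn_perm {G' G B T} : Permutation G' (G ++ boxes B ++ T) -> BIn B G'.
Proof.
  intros P r s Hin. apply (Permutation_in _ (Permutation_sym P)).
  apply in_or_app; right; apply in_or_app; left.
  unfold boxes; apply in_map_iff. exists (r, s); auto.
Qed.
Lemma BIn_perm0 {G' G B} : Permutation G' (G ++ boxes B) -> BIn B G'.
Proof. intros P. apply (@BIn_perm G' G B []). rewrite app_nil_r; exact P. Qed.
Lemma dia_perm {G' G B a b} : Permutation G' (G ++ boxes B ++ [DiaArr a b]) -> In (DiaArr a b) G'.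
Proof.
  intros P. apply (Permutation_in _ (Permutation_sym P)).
  apply in_or_app; right; apply in_or_app; right; left; reflexivity.
Qed.

Lemma mp_boxes L (Hm : has_mp L = true) B : forall Th D,
  (forall r s, In (r, s) B -> In (BoxArr r s) Th /\ sderiv L Th (Some r)) ->
  sderiv L (sigmas B ++ Th) D -> sderiv L Th D.
Proof.
  induction B as [|[r s] B IH]; intros Th D HB Hd.
  - exact Hd.
  - destruct (HB r s (or_introl eq_refl)) as [Hin Hr].
    eapply mpboxS; [exact Hm|exact Hin|exact Hr|].
    apply IH.
    + intros r' s' Hin'. destruct (HB r' s' (or_intror Hin')) as [H1 H2].
      split; [right; exact H1|apply wk1; exact H2].
    + eapply sperm; [exact Hd|]. perm.
Qed.

Definition CUT L A := forall G1, sderiv L G1 (Some A) -> forall Gr D, sderiv L Gr D ->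
  forall G2, incl Gr (A :: G2) -> sderiv L (G1 ++ G2) D.

Lemma cutB L A (HC : CUT L A) G Gr D : sderiv L G (Some A) -> sderiv L Gr D -> incl Gr (A :: G) -> sderiv L G D.
Proof. intros H1 H2 Hi. eapply mono; [apply (HC G H1 Gr D H2 G Hi)|incl_tac]. Qed.

Lemma idl_swap L a e X Y D : CUT L a -> sderiv L [e] (Some a) -> sderiv L (X ++ idl L a ++ Y) D -> sderiv L (X ++ idl L e ++ Y) D.
Proof.
  intros HC He Hd. unfold idl in *. destruct (has_id L); simpl in *; [|exact Hd].
  eapply (cutB L a HC); [eapply mono; [exact He|incl_tac]|exact Hd|incl_tac].
Qed.

Lemma idl_elim L a Th X D : CUT L a -> sderiv L Th (Some a) -> sderiv L (X ++ idl L a) D -> incl X Th -> sderiv L Th D.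
Proof.
  intros HC Ha Hd Hi. unfold idl in *. destruct (has_id L); simpl in *.
  - eapply (cutB L a HC); [exact Ha|exact Hd|incl_tac].
  - eapply mono; [exact Hd|incl_tac].
Qed.

Definition rmA (A : form) (B : list (form * form)) :=
  filter (fun p => if form_eq_dec (BoxArr (fst p) (snd p)) A then false else true) B.

Lemma in_rmA p A B : In p (rmA A B) <-> In p B /\ BoxArr (fst p) (snd p) <> A.
Proof.
  unfold rmA. rewrite filter_In. destruct (form_eq_dec (BoxArr (fst p) (snd p)) A); intuition discriminate.
Qed.

Lemma in_sigmas s B : In s (sigmas B) -> exists r, In (r, s) B.
Proof. unfold sigmas. intros H. apply in_map_iff in H as ([r s'] & <- & Hin). exists r; auto. Qed.
Lemma in_sigmas2 r s B : In (r, s) B -> In s (sigmas B).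
Proof. unfold sigmas. intros H. apply in_map_iff. exists (r, s); auto. Qed.

Lemma sig_rm a b B : incl (sigmas B) (b :: sigmas (rmA (BoxArr a b) B)).
Proof.
  intros s Hs. apply in_sigmas in Hs as (r & Hin).
  destruct (form_eq_dec (BoxArr r s) (BoxArr a b)) as [E|E].
  - inversion E; subst; left; reflexivity.
  - right. apply (in_sigmas2 r). apply in_rmA; auto.
Qed.

Lemma merge L a b B1 c B2 Z W : CUT L a -> CUT L b -> Eqv L a B1 -> sderiv L (sigmas B1 ++ idl L a) (Some b) ->
  Eqv L c B2 -> In (a, b) B2 -> sderiv L (sigmas B2 ++ idl L c ++ Z) W ->
  Eqv L c (B1 ++ rmA (BoxArr a b) B2) /\ sderiv L (sigmas (B1 ++ rmA (BoxArr a b) B2) ++ idl L c ++ Z) W.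
Proof.
  intros Ca Cb HE1 P1 HE2 Hab P2. destruct (HE2 a b Hab) as [Hca Hac]. split.
  - intros r s Hin. apply in_app_or in Hin as [Hin|Hin].
    + destruct (HE1 r s Hin) as [Har Hra]. split.
      * eapply (cutB L a Ca); [exact Hca|exact Har|incl_tac].
      * eapply (cutB L a Ca); [exact Hra|exact Hac|incl_tac].
    + apply in_rmA in Hin as [Hin _]. apply HE2 with s; exact Hin.
  - rewrite sigmas_app.
    assert (P1' : sderiv L (sigmas B1 ++ idl L c ++ []) (Some b)) by (apply (idl_swap L a); auto; rewrite app_nil_r; exact P1).
    pose proof (sig_rm a b B2) as Hs.
    eapply (cutB L b Cb); [eapply mono; [exact P1'|incl_tac]|exact P2|incl_tac].
Qed.

Lemma BIn_merge A B1 B2 G1 Gr G2 : BIn B1 G1 -> BIn B2 Gr -> incl Gr (A :: G2) -> BIn (B1 ++ rmA A B2) (G1 ++ G2).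
Proof.
  intros H1 H2 Hi r s Hin. apply in_app_or in Hin as [Hin|Hin]; apply in_or_app.
  - left; auto.
  - right. apply in_rmA in Hin as [Hin Hne]. simpl in Hne.
    destruct (Hi _ (H2 r s Hin)) as [E|E]; [congruence|exact E].
Qed.

Lemma BIn_noA A B2 Gr G2 : ~ In A (boxes B2) -> BIn B2 Gr -> incl Gr (A :: G2) -> BIn B2 G2.
Proof.
  intros Hn H2 Hi r s Hin. destruct (Hi _ (H2 r s Hin)) as [E|E]; [|exact E].
  exfalso; apply Hn. rewrite E. unfold boxes; apply in_map_iff; exists (r, s); auto.
Qed.

Lemma BIn_mono B G G' : BIn B G -> incl G G' -> BIn B G'.
Proof. intros H Hi r s Hin; auto. Qed.

Inductive LastR L G1 : form -> Prop :=
| lr_and a b : sderiv L G1 (Some a) -> sderiv L G1 (Some b) -> LastR L G1 (And a b)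
| lr_or1 a b : sderiv L G1 (Some a) -> LastR L G1 (Or a b)
| lr_or2 a b : sderiv L G1 (Some b) -> LastR L G1 (Or a b)
| lr_imp a b : sderiv L (a :: G1) (Some b) -> LastR L G1 (Imp a b)
| lr_box B a b : BIn B G1 -> Eqv L a B -> sderiv L (sigmas B ++ idl L a) (Some b) -> LastR L G1 (BoxArr a b)
| lr_dia B x y c d : In (DiaArr x y) G1 -> BIn B G1 -> Eqv L x B -> sderiv L [x] (Some c) -> sderiv L [c] (Some x) ->
    sderiv L (sigmas B ++ idl L x ++ [y]) (Some d) -> LastR L G1 (DiaArr c d)
| lr_mpdia c d : has_mp L = true -> sderiv L G1 (Some c) -> sderiv L G1 (Some d) -> LastR L G1 (DiaArr c d).

Lemma pin {G' : list form} {X : form} {G Y : list form} : Permutation G' (X :: G) -> incl G' Y -> In X Y /\ incl G Y.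
Proof.
  intros P Hi. split.
  - apply Hi. apply (Permutation_in _ (Permutation_sym P)). left; reflexivity.
  - intros z Hz. apply Hi. apply (Permutation_in _ (Permutation_sym P)). right; exact Hz.
Qed.

Lemma isub_l a b : forall A, (A = And a b \/ A = Or a b \/ A = Imp a b \/ A = BoxArr a b \/ A = DiaArr a b) -> isub a A.
Proof. intros A H; repeat destruct H as [->|H]; simpl; auto; subst; simpl; auto. Qed.
Lemma isub_r a b : forall A, (A = And a b \/ A = Or a b \/ A = Imp a b \/ A = BoxArr a b \/ A = DiaArr a b) -> isub b A.
Proof. intros A H; repeat destruct H as [->|H]; simpl; auto; subst; simpl; auto. Qed.

Lemma lr_inv_and L G1 a b : LastR L G1 (And a b) -> sderiv L G1 (Some a) /\ sderiv L G1 (Some b).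
Proof. inversion 1; auto. Qed.
Lemma lr_inv_or L G1 a b : LastR L G1 (Or a b) -> sderiv L G1 (Some a) \/ sderiv L G1 (Some b).
Proof. inversion 1; auto. Qed.
Lemma lr_inv_imp L G1 a b : LastR L G1 (Imp a b) -> sderiv L (a :: G1) (Some b).
Proof. inversion 1; auto. Qed.
Lemma lr_inv_box L G1 a b : LastR L G1 (BoxArr a b) ->
  exists B1, BIn B1 G1 /\ Eqv L a B1 /\ sderiv L (sigmas B1 ++ idl L a) (Some b).
Proof. inversion 1; eauto. Qed.
Lemma lr_inv_dia L G1 c d : LastR L G1 (DiaArr c d) ->
  (exists B1 x y, In (DiaArr x y) G1 /\ BIn B1 G1 /\ Eqv L x B1 /\ sderiv L [x] (Some c) /\ sderiv L [c] (Some x) /\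
     sderiv L (sigmas B1 ++ idl L x ++ [y]) (Some d)) \/
  (has_mp L = true /\ sderiv L G1 (Some c) /\ sderiv L G1 (Some d)).
Proof. inversion 1; subst; [left; exists B, x, y; tauto|right; auto]. Qed.
Lemma lr_inv_var L G1 p : LastR L G1 (Var p) -> False.
Proof. inversion 1. Qed.
Lemma lr_inv_bot L G1 : LastR L G1 Bot -> False.
Proof. inversion 1. Qed.

Section CutRight.
Variable L : logic.
Variable A : form.
Hypothesis IHs : forall B, isub B A -> CUT L B.
Variable G1 : list form.
Hypothesis HR : LastR L G1 A.

Lemma rbox Gr G2 B2 e f : incl Gr (A :: G2) -> BIn B2 Gr -> Eqv L e B2 ->
  sderiv L (sigmas B2 ++ idl L e) (Some f) -> sderiv L (G1 ++ G2) (Some (BoxArr e f)).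
Proof.
  intros Hi Hb HE P.
  destruct (in_dec form_eq_dec A (boxes B2)) as [Hin|Hn].
  - apply in_boxes in Hin as (a & b & -> & Hab).
    destruct (lr_inv_box _ _ _ _ HR) as (B1 & HB1 & HE1 & P1).
    destruct (merge L a b B1 e B2 [] (Some f) (IHs a (or_introl eq_refl)) (IHs b (or_intror eq_refl)) HE1 P1 HE Hab)
      as [HE' P']; [rewrite app_nil_r; exact P|].
    apply (boxS L (B1 ++ rmA (BoxArr a b) B2)); [eapply BIn_merge; eauto|exact HE'|rewrite app_nil_r in P'; exact P'].
  - apply (boxS L B2); auto. eapply BIn_mono; [eapply BIn_noA; eauto|incl_tac].
Qed.

Lemma dia_notbox c d B : ~ In (DiaArr c d) (boxes B).
Proof. intros H. apply in_boxes in H as (? & ? & ? & _); discriminate. Qed.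

Lemma rdia_gen Gr G2 B2 c d W (Goal : Prop) (Q : form -> Prop)
  (HQ : Q c) (HQt : forall x, CUT L c -> sderiv L [x] (Some c) -> sderiv L [c] (Some x) -> Q x)
  (Hmk : forall B x y, In (DiaArr x y) (G1 ++ G2) -> BIn B (G1 ++ G2) -> Eqv L x B -> Q x ->
     sderiv L (sigmas B ++ idl L x ++ [y]) W -> Goal)
  (Hmp : has_mp L = true -> CUT L c -> sderiv L (G1 ++ G2) (Some c) -> sderiv L (G1 ++ G2) W -> Goal) :
  incl Gr (A :: G2) -> In (DiaArr c d) Gr -> BIn B2 Gr -> Eqv L c B2 ->
  sderiv L (sigmas B2 ++ idl L c ++ [d]) W -> Goal.
Proof.
  intros Hi Hd Hb HE P.
  destruct (Hi _ Hd) as [EA|Hd2].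
  - subst A. assert (Hb2 : BIn B2 G2) by (eapply BIn_noA; eauto; apply dia_notbox).
    pose proof (IHs c (or_introl eq_refl)) as Cc. pose proof (IHs d (or_intror eq_refl)) as Cd.
    destruct (lr_inv_dia _ _ _ _ HR) as [(B1 & x & y & Hxy & HB1 & HE1 & Hxc & Hcx & P1)|(Hm & Hc & Hdd)].
    + apply (Hmk (B1 ++ B2) x y).
      * apply in_or_app; left; exact Hxy.
      * intros r s Hin. apply in_app_or in Hin as [Hin|Hin]; apply in_or_app; [left|right]; auto.
      * intros r s Hin. apply in_app_or in Hin as [Hin|Hin]; [apply HE1 with s; exact Hin|].
        destruct (HE r s Hin) as [Hcr Hrc]. split.
        -- eapply (cutB L c Cc); [exact Hxc|exact Hcr|incl_tac].
        -- eapply (cutB L c Cc); [exact Hrc|exact Hcx|incl_tac].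
      * apply HQt; auto.
      * rewrite sigmas_app.
        assert (P2 : sderiv L (sigmas B2 ++ idl L x ++ [d]) W) by (apply (idl_swap L c); auto).
        eapply (cutB L d Cd); [eapply mono; [exact P1|incl_tac]|exact P2|incl_tac].
    + assert (HcT : sderiv L (G1 ++ G2) (Some c)) by (eapply mono; [exact Hc|incl_tac]).
      assert (HdT : sderiv L (G1 ++ G2) (Some d)) by (eapply mono; [exact Hdd|incl_tac]).
      apply (Hmp Hm Cc HcT). apply (mp_boxes L Hm B2).
      * intros r s Hin. split; [apply in_or_app; right; apply Hb2; exact Hin|].
        destruct (HE r s Hin) as [Hcr _].
        eapply (cutB L c Cc); [exact HcT|exact Hcr|incl_tac].
      * assert (P3 : sderiv L ((sigmas B2 ++ [d]) ++ idl L c) W) by (eapply mono; [exact P|incl_tac]).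
        assert (P4 : sderiv L (d :: sigmas B2 ++ G1 ++ G2) W).
        { eapply (idl_elim L c); [exact Cc| |exact P3|incl_tac]. eapply mono; [exact HcT|incl_tac]. }
        eapply (cutB L d Cd); [eapply mono; [exact HdT|incl_tac]|exact P4|incl_tac].
  - assert (Hcc : sderiv L [c] (Some c)) by apply ident.
    destruct (in_dec form_eq_dec A (boxes B2)) as [Hin|Hn].
    + apply in_boxes in Hin as (a & b & -> & Hab).
      destruct (lr_inv_box _ _ _ _ HR) as (B1 & HB1 & HE1 & P1).
      destruct (merge L a b B1 c B2 [d] W (IHs a (or_introl eq_refl)) (IHs b (or_intror eq_refl)) HE1 P1 HE Hab P)
        as [HE' P'].
      apply (Hmk (B1 ++ rmA (BoxArr a b) B2) c d); auto.
      * apply in_or_app; right; exact Hd2.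
      * eapply BIn_merge; eauto.
    + apply (Hmk B2 c d); auto.
      * apply in_or_app; right; exact Hd2.
      * eapply BIn_mono; [eapply BIn_noA; eauto|incl_tac].
Qed.

Lemma rdia Gr G2 B2 c d e t : incl Gr (A :: G2) -> In (DiaArr c d) Gr -> BIn B2 Gr -> Eqv L c B2 ->
  sderiv L [c] (Some e) -> sderiv L [e] (Some c) ->
  sderiv L (sigmas B2 ++ idl L c ++ [d]) (Some t) -> sderiv L (G1 ++ G2) (Some (DiaArr e t)).
Proof.
  intros Hi Hd Hb HE Hce Hec P.
  eapply (rdia_gen Gr G2 B2 c d (Some t) _ (fun x => sderiv L [x] (Some e) /\ sderiv L [e] (Some x)));
    [ | | | | exact Hi | exact Hd | exact Hb | exact HE | exact P].
  - auto.
  - intros x Cc Hxc Hcx. split.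
    + eapply (cutB L c Cc); [exact Hxc|exact Hce|incl_tac].
    + eapply (cutB L c Cc); [exact Hec|exact Hcx|incl_tac].
  - intros B x y Hxy HB HEx [H1 H2] P'. eapply diaS; eauto.
  - intros Hm Cc Hc Ht. apply s_mp_dia; auto.
    eapply (cutB L c Cc); [exact Hc|exact Hce|incl_tac].
Qed.

Lemma rboxdia Gr G2 B2 c d D : incl Gr (A :: G2) -> In (DiaArr c d) Gr -> BIn B2 Gr -> Eqv L c B2 ->
  sderiv L (sigmas B2 ++ idl L c ++ [d]) None -> sderiv L (G1 ++ G2) D.
Proof.
  intros Hi Hd Hb HE P.
  eapply (rdia_gen Gr G2 B2 c d None _ (fun x => True));
    [ | | | | exact Hi | exact Hd | exact Hb | exact HE | exact P].
  - auto.
  - auto.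
  - intros B x y Hxy HB HEx _ P'. eapply boxdiaS; eauto.
  - intros Hm Cc Hc Ht. apply rwk; exact Ht.
Qed.

Lemma perm_incl {G' X : list form} : Permutation G' X -> incl X G'.
Proof. intros P x Hx. apply (Permutation_in _ (Permutation_sym P)); exact Hx. Qed.

Lemma cut_right : forall Gr D, sderiv L Gr D -> forall G2, incl Gr (A :: G2) -> sderiv L (G1 ++ G2) D.
Proof.
  induction 1; intros G2 Hi.
  - destruct (pin H Hi) as [[E|E] _].
    + subst A; exfalso; eapply lr_inv_var; exact HR.
    + apply ax. apply in_or_app; right; exact E.
  - destruct (pin H Hi) as [[E|E] _].
    + subst A; exfalso; eapply lr_inv_bot; exact HR.
    + apply botS. apply in_or_app; right; exact E.
  - pose proof (perm_incl H0) as Hq.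
    assert (P : sderiv L (G1 ++ a :: b :: G2) D) by (apply IHsderiv; incl_tac).
    destruct (pin H0 Hi) as [[E|E] Hg].
    + subst A. destruct (lr_inv_and _ _ _ _ HR) as [Ha Hb].
      assert (P2 : sderiv L (b :: G1 ++ G2) D) by (eapply (cutB L a (IHs a (or_introl eq_refl))); [eapply mono; [exact Ha|incl_tac]|exact P|incl_tac]).
      eapply (cutB L b (IHs b (or_intror eq_refl))); [eapply mono; [exact Hb|incl_tac]|exact P2|incl_tac].
    + apply (andLS L a b); [apply in_or_app; right; exact E|]. eapply mono; [exact P|incl_tac].
  - apply s_andR; auto.
  - pose proof (perm_incl H1) as Hq.
    assert (P1 : sderiv L (G1 ++ a :: G2) D) by (apply IHsderiv1; incl_tac).
    assert (P2 : sderiv L (G1 ++ b :: G2) D) by (apply IHsderiv2; incl_tac).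
    destruct (pin H1 Hi) as [[E|E] Hg].
    + subst A. destruct (lr_inv_or _ _ _ _ HR) as [Ha|Hb].
      * eapply (cutB L a (IHs a (or_introl eq_refl))); [eapply mono; [exact Ha|incl_tac]|exact P1|incl_tac].
      * eapply (cutB L b (IHs b (or_intror eq_refl))); [eapply mono; [exact Hb|incl_tac]|exact P2|incl_tac].
    + apply (orLS L a b); [apply in_or_app; right; exact E|eapply mono; [exact P1|incl_tac]|eapply mono; [exact P2|incl_tac]].
  - apply s_orR1; auto.
  - apply s_orR2; auto.
  - apply s_impR. eapply mono; [apply (IHsderiv (a :: G2)); incl_tac|incl_tac].
  - pose proof (perm_incl H1) as Hq.
    assert (P1 : sderiv L (G1 ++ G2) (Some a)) by (apply IHsderiv1; incl_tac).
    assert (P2 : sderiv L (G1 ++ b :: G2) D) by (apply IHsderiv2; incl_tac).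
    destruct (pin H1 Hi) as [[E|E] Hg].
    + subst A. pose proof (lr_inv_imp _ _ _ _ HR) as Hab.
      assert (P3 : sderiv L (G1 ++ G2) (Some b)) by (eapply (cutB L a (IHs a (or_introl eq_refl)) (G1 ++ G2) (a :: G1 ++ G2)); [exact P1|eapply mono; [exact Hab|incl_tac]|incl_tac]).
      eapply (cutB L b (IHs b (or_intror eq_refl))); [exact P3|exact P2|incl_tac].
    + apply (impLS L a b); [apply in_or_app; right; exact E|exact P1|]. eapply mono; [exact P2|incl_tac].
  - apply (rbox G' G2 B a b Hi (BIn_perm0 H2) H0). rewrite idl_f, app_nil_r by assumption. exact H1.
  - apply (rdia G' G2 B a b e t Hi (dia_perm H4) (BIn_perm H4) H0 H1 H2). rewrite idl_f by assumption. exact H3.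
  - apply (rboxdia G' G2 B a b D Hi (dia_perm H2) (BIn_perm H2) H0). rewrite idl_f by assumption. exact H1.
  - apply (rbox G' G2 B a b Hi (BIn_perm0 H2) H0). rewrite idl_t by assumption. exact H1.
  - apply (rdia G' G2 B a b e t Hi (dia_perm H4) (BIn_perm H4) H0 H1 H2). rewrite idl_t by assumption. exact H3.
  - apply (rboxdia G' G2 B a b D Hi (dia_perm H2) (BIn_perm H2) H0). rewrite idl_t by assumption. exact H1.
  - pose proof (perm_incl H2) as Hq.
    assert (P1 : sderiv L (G1 ++ G2) (Some a)) by (apply IHsderiv1; incl_tac).
    assert (P2 : sderiv L (G1 ++ b :: G2) D) by (apply IHsderiv2; incl_tac).
    destruct (pin H2 Hi) as [[E|E] Hg].
    + subst A. destruct (lr_inv_box _ _ _ _ HR) as (B1 & HB1 & HE1 & Pb).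
      pose proof (IHs a (or_introl eq_refl)) as Ca. pose proof (IHs b (or_intror eq_refl)) as Cb.
      assert (P3 : sderiv L (G1 ++ G2) (Some b)).
      { apply (mp_boxes L H B1).
        - intros r s Hin. split; [apply in_or_app; left; apply HB1; exact Hin|].
          destruct (HE1 r s Hin) as [Har _].
          eapply (cutB L a Ca); [exact P1|exact Har|incl_tac].
        - eapply (idl_elim L a); [exact Ca| |exact Pb|incl_tac]. eapply mono; [exact P1|incl_tac]. }
      eapply (cutB L b Cb); [exact P3|exact P2|incl_tac].
    + apply (mpboxS L a b); [exact H|apply in_or_app; right; exact E|exact P1|]. eapply mono; [exact P2|incl_tac].
  - apply s_mp_dia; auto.
Qed.

End CutRight.

Lemma cut_step L A (IHs : forall B, isub B A -> CUT L B) : CUT L A.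
Proof.
  intros G1 HL. remember (Some A) as SA. revert HeqSA.
  induction HL; intros E Gr DD HRd G2 Hi; try (injection E; intros; subst).
  - eapply mono; [exact HRd|]. pose proof (perm_incl H). incl_tac.
  - apply botS. apply in_or_app; left. apply (perm_incl H). left; reflexivity.
  - apply (andLS L a b); [apply in_or_app; left; apply (perm_incl H); left; reflexivity|].
    eapply mono; [apply (IHHL E Gr DD HRd G2 Hi)|]. pose proof (perm_incl H). incl_tac.
  - eapply cut_right; eauto. apply lr_and; auto.
  - apply (orLS L a b); [apply in_or_app; left; apply (perm_incl H); left; reflexivity| |].
    + eapply mono; [apply (IHHL1 E Gr DD HRd G2 Hi)|]. pose proof (perm_incl H). incl_tac.
    + eapply mono; [apply (IHHL2 E Gr DD HRd G2 Hi)|]. pose proof (perm_incl H). incl_tac.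
  - eapply cut_right; eauto. apply lr_or1; auto.
  - eapply cut_right; eauto. apply lr_or2; auto.
  - eapply cut_right; eauto. apply lr_imp; auto.
  - apply (impLS L a b); [apply in_or_app; left; apply (perm_incl H); left; reflexivity| |].
    + eapply mono; [exact HL1|]. pose proof (perm_incl H). incl_tac.
    + eapply mono; [apply (IHHL2 E Gr DD HRd G2 Hi)|]. pose proof (perm_incl H). incl_tac.
  - eapply cut_right; eauto. eapply lr_box; [exact (BIn_perm0 H1)|exact H0|]. rewrite idl_f, app_nil_r by assumption. exact HL.
  - eapply cut_right; eauto. eapply lr_dia; [exact (dia_perm H1)|exact (BIn_perm H1)|exact H0|exact HL1|exact HL2|].
    rewrite idl_f by assumption. exact HL3.
  - apply (boxdiaS L B a b); [apply in_or_app; left; exact (dia_perm H1)| |exact H0|].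
    + eapply BIn_mono; [exact (BIn_perm H1)|incl_tac].
    + rewrite idl_f by assumption. exact HL.
  - eapply cut_right; eauto. eapply lr_box; [exact (BIn_perm0 H1)|exact H0|]. rewrite idl_t by assumption. exact HL.
  - eapply cut_right; eauto. eapply lr_dia; [exact (dia_perm H1)|exact (BIn_perm H1)|exact H0|exact HL1|exact HL2|].
    rewrite idl_t by assumption. exact HL3.
  - apply (boxdiaS L B a b); [apply in_or_app; left; exact (dia_perm H1)| |exact H0|].
    + eapply BIn_mono; [exact (BIn_perm H1)|incl_tac].
    + rewrite idl_t by assumption. exact HL.
  - apply (mpboxS L a b); [exact H|apply in_or_app; left; apply (perm_incl H0); left; reflexivity| |].
    + eapply mono; [exact HL1|]. pose proof (perm_incl H0). incl_tac.
    + eapply mono; [apply (IHHL2 E Gr DD HRd G2 Hi)|]. pose proof (perm_incl H0). incl_tac.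
  - eapply cut_right; eauto. apply lr_mpdia; auto.
Qed.

Lemma cut_all L A : CUT L A.
Proof.
  induction A; apply cut_step; simpl; intros B HB; try contradiction; destruct HB; subst; auto.
Qed.

Lemma cut L A G Gr D : sderiv L G (Some A) -> sderiv L Gr D -> incl Gr (A :: G) -> sderiv L G D.
Proof. apply cutB, cut_all. Qed.


                     

Inductive hd L (Gm : list form) : form -> Prop :=
| hd_ax f : hderiv L f -> hd L Gm f
| hd_hyp f : In f Gm -> hd L Gm f
| hd_mp a b : hd L Gm (Imp a b) -> hd L Gm a -> hd L Gm b.

Lemma h_id L a : hderiv L (Imp a a).
Proof.
  eapply h_MP; [eapply h_MP; [apply (h_A2 L a (Imp a a) a)|apply h_A1]|apply (h_A1 L a a)].
Qed.

Lemma deduction L a Gm b : hd L (a :: Gm) b -> hd L Gm (Imp a b).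
Proof.
  induction 1.
  - eapply hd_mp; [apply hd_ax, h_A1|apply hd_ax; assumption].
  - destruct H as [<-|H]; [apply hd_ax, h_id|].
    eapply hd_mp; [apply hd_ax, h_A1|apply hd_hyp; assumption].
  - eapply hd_mp; [eapply hd_mp; [apply hd_ax, h_A2|exact IHhd1]|exact IHhd2].
Qed.

Lemma hd_thm L f : hd L [] f -> hderiv L f.
Proof. induction 1; [assumption|destruct H|eapply h_MP; eauto]. Qed.

Lemma hd_subst L Gm f : hd L Gm f -> forall Dl, (forall x, In x Gm -> hd L Dl x) -> hd L Dl f.
Proof. induction 1; intros Dl HD; [apply hd_ax; auto|auto|eapply hd_mp; eauto]. Qed.

Lemma hthm L Gm a b : hderiv L (Imp a b) -> hd L Gm a -> hd L Gm b.
Proof. intros H1 H2. eapply hd_mp; [apply hd_ax; exact H1|exact H2]. Qed.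

Lemma hand L Gm a b : hd L Gm a -> hd L Gm b -> hd L Gm (And a b).
Proof. intros; eapply hd_mp; [eapply hd_mp; [apply hd_ax, h_A5|eauto]|eauto]. Qed.
Lemma hand1 L Gm a b : hd L Gm (And a b) -> hd L Gm a.
Proof. apply hthm, h_A3. Qed.
Lemma hand2 L Gm a b : hd L Gm (And a b) -> hd L Gm b.
Proof. apply hthm, h_A4. Qed.
Lemma hor1 L Gm a b : hd L Gm a -> hd L Gm (Or a b).
Proof. apply hthm, h_A6. Qed.
Lemma hor2 L Gm a b : hd L Gm b -> hd L Gm (Or a b).
Proof. apply hthm, h_A7. Qed.
Lemma hore L Gm a b c : hd L Gm (Or a b) -> hd L (a :: Gm) c -> hd L (b :: Gm) c -> hd L Gm c.
Proof.
  intros H1 H2 H3. apply deduction in H2. apply deduction in H3.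
  eapply hd_mp; [eapply hd_mp; [eapply hd_mp; [apply hd_ax, h_A8|exact H2]|exact H3]|exact H1].
Qed.
Lemma hbot L Gm c : hd L Gm Bot -> hd L Gm c.
Proof. apply hthm, h_A9. Qed.

Lemma hd_wk L Gm f Dl : hd L Gm f -> incl Gm Dl -> hd L Dl f.
Proof. intros H Hi. eapply hd_subst; [exact H|]. intros x Hx; apply hd_hyp, Hi, Hx. Qed.

Lemma iff_thm L a r : hd L [a] r -> hd L [r] a -> hderiv L (Iff a r).
Proof.
  intros H1 H2. apply hd_thm. apply hand; apply deduction; auto.
Qed.

Lemma iff_mp1 L Gm a r : hderiv L (Iff a r) -> hd L Gm a -> hd L Gm r.
Proof. intros H1 H2. eapply hd_mp; [apply hand1 with (Imp r a); apply hd_ax; exact H1|exact H2]. Qed.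
Lemma iff_mp2 L Gm a r : hderiv L (Iff a r) -> hd L Gm r -> hd L Gm a.
Proof. intros H1 H2. eapply hd_mp; [apply hand2 with (Imp a r); apply hd_ax; exact H1|exact H2]. Qed.

Lemma box_mono L a x y : hderiv L (Imp x y) -> hderiv L (Imp (BoxArr a x) (BoxArr a y)).
Proof.
  intros H. assert (Hi : hderiv L (Iff x (And x y))).
  { apply iff_thm.
    - apply hand; [apply hd_hyp; left; auto|eapply hthm; [exact H|apply hd_hyp; left; auto]].
    - apply hand1 with y. apply hd_hyp; left; auto. }
  apply h_RCbox with (a := a) in Hi.
  apply hd_thm, deduction.
  apply hand2 with (BoxArr a x). eapply hthm; [apply h_CMbox|].
  eapply iff_mp1; [exact Hi|apply hd_hyp; left; auto].
Qed.

Fixpoint cj (l : list form) : form := match l with [] => Top | x :: l' => And x (cj l') end.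

Lemma box_cj L Gm a l : (forall x, In x l -> hd L Gm (BoxArr a x)) -> hd L Gm (BoxArr a (cj l)).
Proof.
  induction l as [|x l IH]; intros H; simpl.
  - apply hd_ax, h_CNbox.
  - eapply hthm; [apply h_CCbox|]. apply hand; [apply H; left; auto|apply IH; intros; apply H; right; auto].
Qed.

Lemma cj_hd L Gm l : hd L Gm (cj l) -> forall x, In x l -> hd L Gm x.
Proof.
  induction l as [|y l IH]; intros H x Hx; [destruct Hx|].
  simpl in *. destruct Hx as [<-|Hx]; [eapply hand1; eauto|eapply IH; [eapply hand2; eauto|exact Hx]].
Qed.

Lemma cj_thm L l b : hd L l b -> hderiv L (Imp (cj l) b).
Proof.
  intros H. apply hd_thm, deduction. eapply hd_subst; [exact H|].
  intros x Hx. eapply cj_hd; [apply hd_hyp; left; reflexivity|exact Hx].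
Qed.

Lemma sound_box L G B a b : (forall r s, In (r, s) B -> hderiv L (Iff a r)) -> BIn B G ->
  hd L (sigmas B ++ idl L a) b -> hd L G (BoxArr a b).
Proof.
  intros HI Hb Hp. eapply hthm; [apply box_mono, cj_thm, Hp|].
  apply box_cj. intros x Hx. apply in_app_or in Hx as [Hx|Hx].
  - apply in_sigmas in Hx as (r & Hin).
    pose proof (h_RAbox L a r x (HI r x Hin)) as Hr.
    eapply iff_mp2; [exact Hr|apply hd_hyp; apply Hb; exact Hin].
  - unfold idl in Hx. destruct (has_id L) eqn:E; [|destruct Hx].
    destruct Hx as [<-|[]]. apply hd_ax, h_IDbox; exact E.
Qed.

Lemma sound_dia L G B a b e t : In (DiaArr a b) G -> (forall r s, In (r, s) B -> hderiv L (Iff a r)) -> BIn B G ->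
  hderiv L (Iff a e) -> hd L (sigmas B ++ idl L a ++ [b]) t -> hd L G (DiaArr e t).
Proof.
  intros Hd HI Hb He Hp.
  assert (H1 : hd L (sigmas B ++ idl L a) (Imp b t)).
  { apply deduction. eapply hd_wk; [exact Hp|incl_tac]. }
  pose proof (sound_box L G B a _ HI Hb H1) as H2.
  apply h_RAdia with (b := t) in He.
  eapply iff_mp1; [exact He|].
  eapply hd_mp; [eapply hthm; [apply h_CKdia|exact H2]|apply hd_hyp; exact Hd].
Qed.

Lemma sound_boxdia L G B a b c : In (DiaArr a b) G -> (forall r s, In (r, s) B -> hderiv L (Iff a r)) -> BIn B G ->
  hd L (sigmas B ++ idl L a ++ [b]) Bot -> hd L G c.
Proof.
  intros Hd HI Hb Hp.
  assert (H1 : hd L (sigmas B ++ idl L a) (Imp b Bot)).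
  { apply deduction. eapply hd_wk; [exact Hp|incl_tac]. }
  pose proof (sound_box L G B a _ HI Hb H1) as H2.
  apply hbot. eapply hd_mp; [apply hd_ax, (h_CNdia L a)|].
  eapply hd_mp; [eapply hthm; [apply h_CKdia|exact H2]|apply hd_hyp; exact Hd].
Qed.

Lemma hd_perm L G G' f : hd L G f -> Permutation G' G -> hd L G' f.
Proof. intros H P. eapply hd_wk; [exact H|]. intros x Hx; apply (Permutation_in _ (Permutation_sym P)); exact Hx. Qed.

Fixpoint sound L G D (d : sderiv L G D) {struct d} : hd L G (big_or D).
Proof.
  destruct d.
  - apply hd_hyp. apply (Permutation_in _ (Permutation_sym H)). left; reflexivity.
  - apply hbot, hd_hyp. apply (Permutation_in _ (Permutation_sym H)). left; reflexivity.
  - pose proof (sound _ _ _ d) as IH. eapply hd_subst; [exact IH|].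
    assert (Hab : hd L G' (And a b)) by (apply hd_hyp; apply (Permutation_in _ (Permutation_sym H)); left; reflexivity).
    intros x [<-|[<-|Hx]]; [eapply hand1; eauto|eapply hand2; eauto|].
    apply hd_hyp; apply (Permutation_in _ (Permutation_sym H)); right; exact Hx.
  - apply hand; [apply (sound _ _ _ d1)|apply (sound _ _ _ d2)].
  - pose proof (sound _ _ _ d1) as IH1. pose proof (sound _ _ _ d2) as IH2.
    assert (Hab : hd L G' (Or a b)) by (apply hd_hyp; apply (Permutation_in _ (Permutation_sym H)); left; reflexivity).
    apply (hore L G' a b _ Hab).
    + eapply hd_wk; [exact IH1|]. pose proof (perm_incl H). incl_tac.
    + eapply hd_wk; [exact IH2|]. pose proof (perm_incl H). incl_tac.
  - apply hor1, (sound _ _ _ d).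
  - apply hor2, (sound _ _ _ d).
  - apply deduction, (sound _ _ _ d).
  - pose proof (sound _ _ _ d1) as IH1. pose proof (sound _ _ _ d2) as IH2.
    assert (Ha : hd L G' a) by (eapply hd_wk; [exact IH1|]; pose proof (perm_incl H); incl_tac).
    assert (Hb : hd L G' b).
    { eapply hd_mp; [apply hd_hyp; apply (Permutation_in _ (Permutation_sym H)); left; reflexivity|exact Ha]. }
    eapply hd_subst; [exact IH2|]. intros x [<-|Hx]; [exact Hb|].
    apply hd_hyp; apply (Permutation_in _ (Permutation_sym H)); right; exact Hx.
  - assert (HI : forall r s, In (r, s) B -> hderiv L (Iff a r)).
    { intros r s Hin. destruct (H0 r s Hin) as [x y]. apply iff_thm; [apply (sound _ _ _ x)|apply (sound _ _ _ y)]. }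
    apply (sound_box L G' B a b HI (BIn_perm0 H1)). rewrite idl_f, app_nil_r by assumption. apply (sound _ _ _ d).
  - assert (HI : forall r s, In (r, s) B -> hderiv L (Iff a r)).
    { intros r s Hin. destruct (H0 r s Hin) as [x y]. apply iff_thm; [apply (sound _ _ _ x)|apply (sound _ _ _ y)]. }
    apply (sound_dia L G' B a b e t (dia_perm H1) HI (BIn_perm H1)).
    + apply iff_thm; [apply (sound _ _ _ d1)|apply (sound _ _ _ d2)].
    + rewrite idl_f by assumption. apply (sound _ _ _ d3).
  - assert (HI : forall r s, In (r, s) B -> hderiv L (Iff a r)).
    { intros r s Hin. destruct (H0 r s Hin) as [x y]. apply iff_thm; [apply (sound _ _ _ x)|apply (sound _ _ _ y)]. }
    apply (sound_boxdia L G' B a b _ (dia_perm H1) HI (BIn_perm H1)).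
    rewrite idl_f by assumption. apply (sound _ _ _ d).
  - assert (HI : forall r s, In (r, s) B -> hderiv L (Iff a r)).
    { intros r s Hin. destruct (H0 r s Hin) as [x y]. apply iff_thm; [apply (sound _ _ _ x)|apply (sound _ _ _ y)]. }
    apply (sound_box L G' B a b HI (BIn_perm0 H1)). rewrite idl_t by assumption. apply (sound _ _ _ d).
  - assert (HI : forall r s, In (r, s) B -> hderiv L (Iff a r)).
    { intros r s Hin. destruct (H0 r s Hin) as [x y]. apply iff_thm; [apply (sound _ _ _ x)|apply (sound _ _ _ y)]. }
    apply (sound_dia L G' B a b e t (dia_perm H1) HI (BIn_perm H1)).
    + apply iff_thm; [apply (sound _ _ _ d1)|apply (sound _ _ _ d2)].
    + rewrite idl_t by assumption. apply (sound _ _ _ d3).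
  - assert (HI : forall r s, In (r, s) B -> hderiv L (Iff a r)).
    { intros r s Hin. destruct (H0 r s Hin) as [x y]. apply iff_thm; [apply (sound _ _ _ x)|apply (sound _ _ _ y)]. }
    apply (sound_boxdia L G' B a b _ (dia_perm H1) HI (BIn_perm H1)).
    rewrite idl_t by assumption. apply (sound _ _ _ d).
  - pose proof (sound _ _ _ d1) as IH1. pose proof (sound _ _ _ d2) as IH2.
    assert (Ha : hd L G' a) by (eapply hd_wk; [exact IH1|]; pose proof (perm_incl H0); incl_tac).
    assert (Hbx : hd L G' (BoxArr a b)) by (apply hd_hyp; apply (Permutation_in _ (Permutation_sym H0)); left; reflexivity).
    assert (Hb : hd L G' b) by (eapply hd_mp; [eapply hthm; [apply h_MPbox; assumption|exact Hbx]|exact Ha]).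
    eapply hd_subst; [exact IH2|]. intros x [<-|[<-|Hx]]; [exact Hbx|exact Hb|].
    apply hd_hyp; apply (Permutation_in _ (Permutation_sym H0)); right; exact Hx.
  - eapply hthm; [apply h_MPdia; assumption|]. apply hand; [apply (sound _ _ _ d1)|apply (sound _ _ _ d2)].
Qed.

Lemma iff_split L a r : sderiv L [] (Some (Iff a r)) -> sderiv L [a] (Some r) /\ sderiv L [r] (Some a).
Proof.
  intros H. unfold Iff in H. split.
  - eapply (cut L (And (Imp a r) (Imp r a)) [a] [And (Imp a r) (Imp r a); a]); [eapply mono; [exact H|intros x []]| |incl_tac].
    apply (andLS L (Imp a r) (Imp r a)); [left; auto|].
    apply (impLS L a r); [left; auto|apply ax; simpl; tauto|apply ax; left; auto].
  - eapply (cut L (And (Imp a r) (Imp r a)) [r] [And (Imp a r) (Imp r a); r]); [eapply mono; [exact H|intros x []]| |incl_tac].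
    apply (andLS L (Imp a r) (Imp r a)); [left; auto|].
    apply (impLS L r a); [simpl; tauto|apply ax; simpl; tauto|apply ax; left; auto].
Qed.

Ltac inS := simpl; tauto.
Ltac axS := apply ax; simpl; tauto.

Lemma Eqv_one L a s : Eqv L a [(a, s)].
Proof. intros r s' [E|[]]; inversion E; subst; split; apply ident. Qed.
Lemma Eqv_nil L a : Eqv L a [].
Proof. intros r s []. Qed.
Lemma BIn_nil G : BIn [] G.
Proof. intros r s []. Qed.

Lemma compl_thm L f : hderiv L f -> sderiv L [] (Some f).
Proof.
  induction 1.
  - apply s_impR, s_impR; axS.
  - apply s_impR, s_impR, s_impR.
    apply (impLS L a b); [inS|axS|].
    apply (impLS L a (Imp b c)); [inS|axS|].
    apply (impLS L b c); [inS|axS|axS].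
  - apply s_impR. apply (andLS L a b); [inS|axS].
  - apply s_impR. apply (andLS L a b); [inS|axS].
  - apply s_impR, s_impR, s_andR; axS.
  - apply s_impR, s_orR1; axS.
  - apply s_impR, s_orR2; axS.
  - apply s_impR, s_impR, s_impR. apply (orLS L a b); [inS| |].
    + apply (impLS L a c); [inS|axS|axS].
    + apply (impLS L b c); [inS|axS|axS].
  - apply s_impR, botS; inS.
  - eapply (cut L (Imp a b) [] [Imp a b]); [exact IHhderiv1| |incl_tac].
    apply (impLS L a b); [inS|eapply mono; [exact IHhderiv2|incl_tac]|axS].
  - apply s_impR, s_andR.
    + apply (boxS L [(a, And b c)]); [intros r s [E|[]]; inversion E; subst; inS|apply Eqv_one|].
      rewrite sigmas_cons; simpl. apply (andLS L b c); [inS|axS].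
    + apply (boxS L [(a, And b c)]); [intros r s [E|[]]; inversion E; subst; inS|apply Eqv_one|].
      rewrite sigmas_cons; simpl. apply (andLS L b c); [inS|axS].
  - apply s_impR. apply (andLS L (BoxArr a b) (BoxArr a c)); [inS|].
    apply (boxS L [(a, b); (a, c)]).
    + intros r s [E|[E|[]]]; inversion E; subst; inS.
    + intros r s [E|[E|[]]]; inversion E; subst; split; apply ident.
    + rewrite !sigmas_cons; simpl. apply s_andR; axS.
  - apply (boxS L []); [apply BIn_nil|apply Eqv_nil|]. apply s_impR, botS; inS.
  - apply s_impR. apply (boxdiaS L [] a Bot); [inS|apply BIn_nil|apply Eqv_nil|]. apply botS.
    rewrite sigmas_nil. simpl. apply in_or_app; right; left; auto.
  - apply s_impR, s_impR. apply (diaS L [(a, Imp b c)] a b); [inS| |apply Eqv_one|apply ident|apply ident|].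
    + intros r s [E|[]]; inversion E; subst; inS.
    + rewrite sigmas_cons; simpl. apply (impLS L b c); [inS|apply ax; simpl; rewrite in_app_iff; simpl; tauto|axS].
  - destruct (iff_split _ _ _ IHhderiv) as [Har Hra]. unfold Iff. apply s_andR; apply s_impR.
    + apply (boxS L [(a, b)]); [intros r' s [E|[]]; inversion E; subst; inS| |].
      * intros r' s [E|[]]; inversion E; subst; auto.
      * rewrite sigmas_cons; simpl. axS.
    + apply (boxS L [(r, b)]); [intros r' s [E|[]]; inversion E; subst; inS| |].
      * intros r' s [E|[]]; inversion E; subst; auto.
      * rewrite sigmas_cons; simpl. axS.
  - destruct (iff_split _ _ _ IHhderiv) as [Hbc Hcb]. unfold Iff. apply s_andR; apply s_impR.
    + apply (boxS L [(a, b)]); [intros r' s [E|[]]; inversion E; subst; inS|apply Eqv_one|].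
      rewrite sigmas_cons; simpl. eapply mono; [exact Hbc|incl_tac].
    + apply (boxS L [(a, c)]); [intros r' s [E|[]]; inversion E; subst; inS|apply Eqv_one|].
      rewrite sigmas_cons; simpl. eapply mono; [exact Hcb|incl_tac].
  - destruct (iff_split _ _ _ IHhderiv) as [Har Hra]. unfold Iff. apply s_andR; apply s_impR.
    + apply (diaS L [] a b); [inS|apply BIn_nil|apply Eqv_nil|exact Har|exact Hra|].
      rewrite sigmas_nil; simpl. apply ax, in_or_app; right; left; auto.
    + apply (diaS L [] r b); [inS|apply BIn_nil|apply Eqv_nil|exact Hra|exact Har|].
      rewrite sigmas_nil; simpl. apply ax, in_or_app; right; left; auto.
  - destruct (iff_split _ _ _ IHhderiv) as [Hbc Hcb]. unfold Iff. apply s_andR; apply s_impR.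
    + apply (diaS L [] a b); [inS|apply BIn_nil|apply Eqv_nil|apply ident|apply ident|].
      rewrite sigmas_nil; simpl. eapply mono; [exact Hbc|incl_tac].
    + apply (diaS L [] a c); [inS|apply BIn_nil|apply Eqv_nil|apply ident|apply ident|].
      rewrite sigmas_nil; simpl. eapply mono; [exact Hcb|incl_tac].
  - apply (boxS L []); [apply BIn_nil|apply Eqv_nil|]. rewrite sigmas_nil, idl_t by assumption. axS.
  - apply s_impR, s_impR. apply (mpboxS L a b); [assumption|inS|axS|axS].
  - apply s_impR. apply (andLS L a b); [inS|]. apply s_mp_dia; [assumption|axS|axS].
Qed.

Lemma big_and_R L G l x : sderiv L G (Some x) -> (forall y, In y l -> sderiv L G (Some y)) -> sderiv L G (Some (fold_left And l x)).
Proof.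
  revert x; induction l as [|y l IH]; intros x Hx Hl; simpl.
  - exact Hx.
  - apply IH; [apply s_andR; [exact Hx|apply Hl; left; reflexivity]|intros; apply Hl; right; auto].
Qed.

Lemma big_and_L L Gm l x : hd L Gm (fold_left And l x) -> hd L Gm x /\ (forall y, In y l -> hd L Gm y).
Proof.
  revert x; induction l as [|y l IH]; intros x H; simpl in *.
  - split; [exact H|intros _ []].
  - destruct (IH _ H) as [H1 H2]. split; [eapply hand1; eauto|].
    intros z [<-|Hz]; [eapply hand2; eauto|auto].
Qed.

Lemma none_of_bot L G : sderiv L G (Some Bot) -> sderiv L G None.
Proof. intros H. eapply (cut L Bot G [Bot]); [exact H|apply botS; left; auto|incl_tac]. Qed.

Theorem theorem11 (L : logic) (G : list form) (D : option form) :
  sderiv L G D <-> hderiv L (iota G D).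
Proof.
  split.
  - intros H. pose proof (sound L G D H) as Hs. destruct G as [|x l]; simpl.
    + apply hd_thm; exact Hs.
    + apply hd_thm, deduction. eapply hd_subst; [exact Hs|].
      intros y Hy. destruct (big_and_L L [fold_left And l x] l x (hd_hyp L [fold_left And l x] (fold_left And l x) (or_introl eq_refl))) as [H1 H2].
      destruct Hy as [<-|Hy]; auto.
  - intros H. apply compl_thm in H. destruct G as [|x l]; simpl in H.
    + destruct D; simpl in H; [exact H|apply none_of_bot; exact H].
    + set (X := fold_left And l x) in *.
      assert (HX : sderiv L (x :: l) (Some X)).
      { apply big_and_R; [apply ax; left; reflexivity|intros y Hy; apply ax; right; exact Hy]. }
      assert (HY : sderiv L (x :: l) (Some (big_or D))).
      { eapply (cut L (Imp X (big_or D)) (x :: l) (Imp X (big_or D) :: x :: l));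
          [eapply mono; [exact H|intros y []]| |incl_tac].
        apply (impLS L X (big_or D)); [left; reflexivity|eapply mono; [exact HX|incl_tac]|apply ax; left; reflexivity]. }
      destruct D; simpl in HY; [exact HY|apply none_of_bot; exact HY].
Qed.
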